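(* $(\mathcal{D}, \delta, \varepsilon)$ is a comonad on $\mathsf{CLAC}$.
   Context: Composition is written in diagrammatic order ($fg$ means first $f$, then $g$). A left additive category is a category whose hom-sets are commutative monoids with $f(g+h)=fg+fh$ and $f0=0$; a map $h$ is additive if $(f+g)h=fh+gh$ and $0h=0$. A Cartesian left additive category is a left additive category with finite products whose projections are additive. $\mathsf{CLAC}$ is the category of Cartesian left additive categories and strict Cartesian left additive functors (functors preserving finite products strictly, i.e. $\mathsf{F}(A\times B)=\mathsf{F}(A)\times\mathsf{F}(B)$, terminal object and projections preserved on the nose, and preserving sums and zeros). For a Cartesian left additive category $\mathbb{X}$, let $\mathsf{P}(A)=A\times A$, $\mathsf{P}(f)=f\times f$. A pre-$\mathsf{D}$-sequence $f_\bullet: A \to B$ is a sequence $(f_0,f_1,\dots)$ with $f_n:\mathsf{P}^n(A)\to B$; for maps $h,k$ of $\mathbb{X}$ set $(h\cdot f_\bullet)_n=\mathsf{P}^n(h)f_n$ and $(f_\bullet\cdot k)_n=f_n k$. The tangent is $\mathsf{T}(f_\bullet)_n=\langle \mathsf{P}^n(\pi_0)f_n, f_{n+1}\rangle$ and the differential is $\mathsf{D}[f_\bullet]_n=f_{n+1}$. Identities are $i_0=1$, $i_n=\pi_1\pi_1\cdots\pi_1$ ($n$ times), composition is $(f_\bullet\ast g_\bullet)_n=\mathsf{T}^n(f_\bullet)_0\, g_n$, sums and zero are pointwise, projections are $i_\bullet\cdot\pi_j$ and pairing is pointwise $\langle f_\bullet,g_\bullet\rangle_n=\langle f_n,g_n\rangle$.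 A $\mathsf{D}$-sequence is a pre-$\mathsf{D}$-sequence such that for all $n$: $\langle 1,0\rangle\cdot\mathsf{D}^{n+1}[f_\bullet]=0_\bullet$; $(1\times(\pi_0+\pi_1))\cdot\mathsf{D}^{n+1}[f_\bullet]=((1\times\pi_0)\cdot\mathsf{D}^{n+1}[f_\bullet])+((1\times\pi_1)\cdot\mathsf{D}^{n+1}[f_\bullet])$; $\ell\cdot\mathsf{D}^{n+2}[f_\bullet]=\mathsf{D}^{n+1}[f_\bullet]$; $c\cdot\mathsf{D}^{n+2}[f_\bullet]=\mathsf{D}^{n+2}[f_\bullet]$, where $\ell=\langle 1,0\rangle\times\langle 0,1\rangle$ and $c=1\times\langle\pi_1,\pi_0\rangle\times 1$. $\mathcal{D}[\mathbb{X}]$ is the Cartesian left additive category of $\mathsf{D}$-sequences of $\mathbb{X}$ (same objects as $\mathbb{X}$). For a strict Cartesian left additive functor $\mathsf{F}$, $\mathcal{D}[\mathsf{F}]$ acts as $\mathsf{F}$ on objects and by $\mathcal{D}[\mathsf{F}](f_\bullet)_n=\mathsf{F}(f_n)$. The counit $\varepsilon:\mathcal{D}[\mathbb{X}]\to\mathbb{X}$ is the identity on objects and $\varepsilon(f_\bullet)=f_0$; the comultiplication $\delta:\mathcal{D}[\mathbb{X}]\to\mathcal{D}[\mathcal{D}[\mathbb{X}]]$ is the identity on objects and $\delta(f_\bullet)_0=f_\bullet$, $\delta(f_\bullet)_n=\mathsf{D}^n[f_\bullet]$. *)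

(* Defs.v *)
(* Composition is written in
   diagrammatic order: [comp f g] is "first f, then g". *)

(* The predicate [ok]
   singles out the morphisms that belong to the category (for a plain CLAC
   one may take [ok := fun _ _ _ => True]); all axioms are only required on
   [ok] morphisms.  This is needed so that D[X] (whose maps are the
   D-sequences, a subset of the pre-D-sequences) can be formed as an object
   of the same kind, and iterated (D[D[X]]).                                 *)
Record RawCLAC : Type := {
  Ob : Type;
  Hom : Ob -> Ob -> Type;
  idm : forall A, Hom A A;
  comp : forall A B C, Hom A B -> Hom B C -> Hom A C;
  add : forall A B, Hom A B -> Hom A B -> Hom A B;
  zero : forall A B, Hom A B;
  prod : Ob -> Ob -> Ob;
  term : Ob;
  p0 : forall A B, Hom (prod A B) A;
  p1 : forall A B, Hom (prod A B) B;
  pair : forall C A B, Hom C A -> Hom C B -> Hom C (prod A B);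
  bang : forall A, Hom A term;
  ok : forall A B, Hom A B -> Prop
}.

Arguments idm {_} A.
Arguments comp {_ A B C} f g.
Arguments add {_ A B} f g.
Arguments zero {_ A B}.
Arguments p0 {_} A B.
Arguments p1 {_} A B.
Arguments pair {_ C A B} f g.
Arguments bang {_} A.
Arguments ok {_ A B} f.

Record is_CLAC (X : RawCLAC) : Prop := {
  ok_id : forall A, ok (idm (r:=X) A);
  ok_comp : forall A B C (f : Hom X A B) (g : Hom X B C),
      ok f -> ok g -> ok (comp f g);
  ok_add : forall A B (f g : Hom X A B), ok f -> ok g -> ok (add f g);
  ok_zero : forall A B, ok (@zero X A B);
  ok_p0 : forall A B, ok (@p0 X A B);
  ok_p1 : forall A B, ok (@p1 X A B);
  ok_pair : forall C A B (f : Hom X C A) (g : Hom X C B),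
      ok f -> ok g -> ok (pair f g);
  ok_bang : forall A, ok (@bang X A);
  comp_id_l : forall A B (f : Hom X A B), ok f -> comp (idm A) f = f;
  comp_id_r : forall A B (f : Hom X A B), ok f -> comp f (idm B) = f;
  comp_assoc : forall A B C D (f : Hom X A B) (g : Hom X B C) (h : Hom X C D),
      ok f -> ok g -> ok h -> comp (comp f g) h = comp f (comp g h);
  add_assoc : forall A B (f g h : Hom X A B), ok f -> ok g -> ok h ->
      add (add f g) h = add f (add g h);
  add_comm : forall A B (f g : Hom X A B), ok f -> ok g -> add f g = add g f;
  add_0l : forall A B (f : Hom X A B), ok f -> add zero f = f;
  comp_addr : forall A B C (f : Hom X A B) (g h : Hom X B C),
      ok f -> ok g -> ok h -> comp f (add g h) = add (comp f g) (comp f h);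
  comp_0r : forall A B C (f : Hom X A B), ok f -> comp f (@zero X B C) = zero;
  pair_p0 : forall C A B (f : Hom X C A) (g : Hom X C B),
      ok f -> ok g -> comp (pair f g) (p0 A B) = f;
  pair_p1 : forall C A B (f : Hom X C A) (g : Hom X C B),
      ok f -> ok g -> comp (pair f g) (p1 A B) = g;
  pair_eta : forall C A B (h : Hom X C (prod X A B)),
      ok h -> pair (comp h (p0 A B)) (comp h (p1 A B)) = h;
  bang_uniq : forall A (h : Hom X A (term X)), ok h -> h = bang A;
  p0_add : forall C A B (f g : Hom X C (prod X A B)), ok f -> ok g ->
      comp (add f g) (p0 A B) = add (comp f (p0 A B)) (comp g (p0 A B));
  p0_zero : forall C A B, comp (@zero X C (prod X A B)) (p0 A B) = zero;
  p1_add : forall C A B (f g : Hom X C (prod X A B)), ok f -> ok g ->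
      comp (add f g) (p1 A B) = add (comp f (p1 A B)) (comp g (p1 A B));
  p1_zero : forall C A B, comp (@zero X C (prod X A B)) (p1 A B) = zero
}.

Definition castH {R : RawCLAC} {A A' B B' : Ob R} (eA : A = A') (eB : B = B')
  (f : Hom R A B) : Hom R A' B' :=
  match eA in _ = Z return Hom R Z B' with
  | eq_refl => match eB in _ = W return Hom R A W with eq_refl => f end
  end.

Section Seq.
Variable R : RawCLAC.

Definition P (A : Ob R) : Ob R := prod R A A.
Definition cross {A B A' B' : Ob R} (f : Hom R A A') (g : Hom R B B')
  : Hom R (prod R A B) (prod R A' B') :=
  pair (comp (p0 A B) f) (comp (p1 A B) g).
Definition Pm {A B : Ob R} (f : Hom R A B) : Hom R (P A) (P B) := cross f f.

Fixpoint Pn (n : nat) (A : Ob R) : Ob R :=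
  match n with 0 => A | S m => Pn m (P A) end.
Fixpoint Pnm (n : nat) {A B : Ob R} (f : Hom R A B) : Hom R (Pn n A) (Pn n B) :=
  match n return Hom R (Pn n A) (Pn n B) with
  | 0 => f | S m => Pnm m (Pm f) end.
Fixpoint PnS (n : nat) (A : Ob R) : Pn (S n) A = P (Pn n A) :=
  match n as k return Pn (S k) A = P (Pn k A) with
  | 0 => eq_refl
  | S m => PnS m (P A)
  end.

Definition preseq (A B : Ob R) : Type := forall n : nat, Hom R (Pn n A) B.

Definition castps {A A' B : Ob R} (e : A = A') (g : preseq A B) : preseq A' B :=
  match e in _ = Z return preseq Z B with eq_refl => g end.

Definition lact {A' A B : Ob R} (h : Hom R A' A) (g : preseq A B) : preseq A' B :=
  fun n => comp (Pnm n h) (g n).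
Definition ract {A B C : Ob R} (g : preseq A B) (k : Hom R B C) : preseq A C :=
  fun n => comp (g n) k.
Definition addps {A B : Ob R} (f g : preseq A B) : preseq A B :=
  fun n => add (f n) (g n).
Definition zerops {A B : Ob R} : preseq A B := fun n => zero.

Definition Tps {A B : Ob R} (f : preseq A B) : preseq (P A) (P B) :=
  fun n => pair (comp (Pnm n (p0 A A)) (f n)) (f (S n)).
Fixpoint Tn (n : nat) {A B : Ob R} (f : preseq A B) : preseq (Pn n A) (Pn n B) :=
  match n return preseq (Pn n A) (Pn n B) with
  | 0 => f | S m => Tn m (Tps f) end.

Definition Dps {A B : Ob R} (f : preseq A B) : preseq (P A) B :=
  fun n => f (S n).
Fixpoint Dn (n : nat) {A B : Ob R} (f : preseq A B) : preseq (Pn n A) B :=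
  match n return preseq (Pn n A) B with
  | 0 => f | S m => Dn m (Dps f) end.

Fixpoint iseq (n : nat) (A : Ob R) : Hom R (Pn n A) A :=
  match n return Hom R (Pn n A) A with
  | 0 => idm A
  | S m => comp (iseq m (P A)) (p1 A A)
  end.

Definition compps {A B C : Ob R} (f : preseq A B) (g : preseq B C) : preseq A C :=
  fun n => comp (Tn n f 0) (g n).

(* the maps l = <1,0> x <0,1> and c = 1 x <pi_1,pi_0> x 1 (middle swap
   ((a,b),(c,d)) |-> ((a,c),(b,d)) on P(P(Y)) = (Y x Y) x (Y x Y)) *)
Definition ellmap (Y : Ob R) : Hom R (P Y) (P (P Y)) :=
  cross (pair (idm Y) zero) (pair zero (idm Y)).
Definition cmap (Y : Ob R) : Hom R (P (P Y)) (P (P Y)) :=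
  pair (pair (comp (p0 (P Y) (P Y)) (p0 Y Y)) (comp (p1 (P Y) (P Y)) (p0 Y Y)))
       (pair (comp (p0 (P Y) (P Y)) (p1 Y Y)) (comp (p1 (P Y) (P Y)) (p1 Y Y))).

(* D-sequence axioms.  D^{n+1}[f] : P^{n+1}(A) = P(P^n(A)) -> B and
   D^{n+2}[f] : P^{n+2}(A) = P(P(P^n(A))) -> B. *)
Definition Dseq {A B : Ob R} (f : preseq A B) : Prop :=
  forall n : nat,
    let Y := Pn n A in
    let D1 : preseq (P Y) B := castps (PnS n A) (Dn (S n) f) in
    let D2 : preseq (P (P Y)) B :=
      castps (eq_trans (PnS (S n) A) (f_equal P (PnS n A))) (Dn (S (S n)) f) in
    lact (pair (idm Y) zero) D1 = zerops
    /\ lact (cross (idm Y) (add (p0 Y Y) (p1 Y Y))) D1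
       = addps (lact (cross (idm Y) (p0 Y Y)) D1)
               (lact (cross (idm Y) (p1 Y Y)) D1)
    /\ lact (ellmap Y) D2 = D1
    /\ lact (cmap Y) D2 = D2.

Definition okD {A B : Ob R} (f : preseq A B) : Prop :=
  (forall n, ok (f n)) /\ Dseq f.

End Seq.

Arguments P {R} A.
Arguments Pn {R} n A.
Arguments Pnm {R} n {A B} f.
Arguments PnS {R} n A.
Arguments iseq {R} n A.
Arguments Dn {R} n {A B} f.

Definition Dc (X : RawCLAC) : RawCLAC := {|
  Ob := Ob X;
  Hom := preseq X;
  idm := fun A n => iseq n A;
  comp := fun A B C f g => compps X f g;
  add := fun A B f g => addps X f g;
  zero := fun A B => zerops X;
  prod := prod X;
  term := term X;
  p0 := fun A B n => comp (iseq n (prod X A B)) (p0 A B);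
  p1 := fun A B n => comp (iseq n (prod X A B)) (p1 A B);
  pair := fun C A B f g n => pair (f n) (g n);
  bang := fun A n => bang (Pn n A);
  ok := fun A B f => okD X f
|}.

Record RawFun (X Y : RawCLAC) : Type := {
  Fo : Ob X -> Ob Y;
  Fm : forall A B, Hom X A B -> Hom Y (Fo A) (Fo B);
  Fprod : forall A B, Fo (prod X A B) = prod Y (Fo A) (Fo B);
  Fterm : Fo (term X) = term Y
}.
Arguments Fo {X Y} _ A.
Arguments Fm {X Y} _ {A B} _.
Arguments Fprod {X Y} _ A B.
Arguments Fterm {X Y} _.

Record is_sfun {X Y : RawCLAC} (F : RawFun X Y) : Prop := {
  fm_ok : forall A B (f : Hom X A B), ok f -> ok (Fm F f);
  fm_id : forall A, Fm F (idm A) = idm (Fo F A);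
  fm_comp : forall A B C (f : Hom X A B) (g : Hom X B C), ok f -> ok g ->
      Fm F (comp f g) = comp (Fm F f) (Fm F g);
  fm_add : forall A B (f g : Hom X A B), ok f -> ok g ->
      Fm F (add f g) = add (Fm F f) (Fm F g);
  fm_zero : forall A B, Fm F (@zero X A B) = zero;
  fm_p0 : forall A B, castH (Fprod F A B) eq_refl (Fm F (p0 A B))
                      = p0 (Fo F A) (Fo F B);
  fm_p1 : forall A B, castH (Fprod F A B) eq_refl (Fm F (p1 A B))
                      = p1 (Fo F A) (Fo F B)
}.

Definition idF (X : RawCLAC) : RawFun X X := {|
  Fo := fun A => A;
  Fm := fun A B f => f;
  Fprod := fun A B => eq_refl;
  Fterm := eq_refl
|}.

Definition compF {X Y Z : RawCLAC} (F : RawFun X Y) (G : RawFun Y Z) : RawFun X Z := {|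
  Fo := fun A => Fo G (Fo F A);
  Fm := fun A B f => Fm G (Fm F f);
  Fprod := fun A B => eq_trans (f_equal (Fo G) (Fprod F A B)) (Fprod G (Fo F A) (Fo F B));
  Fterm := eq_trans (f_equal (Fo G) (Fterm F)) (Fterm G)
|}.

Definition feq {X Y : RawCLAC} (F G : RawFun X Y) : Prop :=
  exists eo : forall A, Fo F A = Fo G A,
    forall A B (f : Hom X A B), ok f -> castH (eo A) (eo B) (Fm F f) = Fm G f.

Fixpoint FPn {X Y : RawCLAC} (F : RawFun X Y) (n : nat) (A : Ob X)
  : Fo F (Pn n A) = Pn n (Fo F A) :=
  match n as k return Fo F (Pn k A) = Pn k (Fo F A) with
  | 0 => eq_refl
  | S m => eq_trans (FPn F m (P A)) (f_equal (fun Z => Pn m Z) (Fprod F A A))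
  end.

Definition DF {X Y : RawCLAC} (F : RawFun X Y) : RawFun (Dc X) (Dc Y) :=
  @Build_RawFun (Dc X) (Dc Y) (Fo F)
    (fun A B (f : preseq X A B) n => castH (FPn F n A) eq_refl (Fm F (f n)))
    (Fprod F) (Fterm F).

Definition eps (X : RawCLAC) : RawFun (Dc X) X :=
  @Build_RawFun (Dc X) X (fun A => A)
    (fun A B (f : preseq X A B) => f 0)
    (fun A B => eq_refl) eq_refl.

Definition delta (X : RawCLAC) : RawFun (Dc X) (Dc (Dc X)) :=
  @Build_RawFun (Dc X) (Dc (Dc X)) (fun A => A)
    (fun A B (f : preseq X A B) n => Dn n f)
    (fun A B => eq_refl) eq_refl.

Definition is_comonad_on_CLAC
  (T : RawCLAC -> RawCLAC)
  (TF : forall X Y : RawCLAC, RawFun X Y -> RawFun (T X) (T Y))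
  (ep : forall X, RawFun (T X) X)
  (de : forall X, RawFun (T X) (T (T X))) : Prop :=
  (forall X, is_CLAC X -> is_CLAC (T X))
  /\ (forall X Y (F : RawFun X Y), is_CLAC X -> is_CLAC Y -> is_sfun F ->
        is_sfun (TF X Y F))
  /\ (forall X Y (F G : RawFun X Y), is_CLAC X -> is_CLAC Y ->
        is_sfun F -> is_sfun G -> feq F G -> feq (TF X Y F) (TF X Y G))
  /\ (forall X, is_CLAC X -> feq (TF X X (idF X)) (idF (T X)))
  /\ (forall X Y Z (F : RawFun X Y) (G : RawFun Y Z),
        is_CLAC X -> is_CLAC Y -> is_CLAC Z -> is_sfun F -> is_sfun G ->
        feq (TF X Z (compF F G)) (compF (TF X Y F) (TF Y Z G)))
  /\ (forall X, is_CLAC X -> is_sfun (ep X))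
  /\ (forall X, is_CLAC X -> is_sfun (de X))
  /\ (forall X Y (F : RawFun X Y), is_CLAC X -> is_CLAC Y -> is_sfun F ->
        feq (compF (TF X Y F) (ep Y)) (compF (ep X) F))
  /\ (forall X Y (F : RawFun X Y), is_CLAC X -> is_CLAC Y -> is_sfun F ->
        feq (compF (de X) (TF (T X) (T Y) (TF X Y F))) (compF (TF X Y F) (de Y)))
  /\ (forall X, is_CLAC X -> feq (compF (de X) (ep (T X))) (idF (T X)))
  /\ (forall X, is_CLAC X -> feq (compF (de X) (TF (T X) X (ep X))) (idF (T X)))
  /\ (forall X, is_CLAC X ->
        feq (compF (de X) (de (T X))) (compF (de X) (TF (T X) (T (T X)) (de X)))).

(* Main.v *)
Require Import Defs.
From Stdlib Require Import FunctionalExtensionality Eqdep.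

Section Gen.
Variable R : RawCLAC.

Definition okS {A B : Ob R} (f : preseq R A B) := forall n, ok (f n).

Definition L0 {A B : Ob R} (f : preseq R A B) : Prop :=
  lact R (pair (idm A) zero) (Dps R f) = zerops R
  /\ lact R (cross R (idm A) (add (p0 A A) (p1 A A))) (Dps R f)
     = addps R (lact R (cross R (idm A) (p0 A A)) (Dps R f))
               (lact R (cross R (idm A) (p1 A A)) (Dps R f))
  /\ lact R (ellmap R A) (Dps R (Dps R f)) = Dps R f
  /\ lact R (cmap R A) (Dps R (Dps R f)) = Dps R (Dps R f).

Definition Dseq_at {A B : Ob R} (f : preseq R A B) (n : nat) : Prop :=
    let Y := Pn n A in
    let D1 : preseq R (P Y) B := castps R (PnS n A) (Dn (S n) f) in
    let D2 : preseq R (P (P Y)) B :=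
      castps R (eq_trans (PnS (S n) A) (f_equal P (PnS n A))) (Dn (S (S n)) f) in
    lact R (pair (idm Y) zero) D1 = zerops R
    /\ lact R (cross R (idm Y) (add (p0 Y Y) (p1 Y Y))) D1
       = addps R (lact R (cross R (idm Y) (p0 Y Y)) D1)
               (lact R (cross R (idm Y) (p1 Y Y)) D1)
    /\ lact R (ellmap R Y) D2 = D1
    /\ lact R (cmap R Y) D2 = D2.

Definition DS {A B : Ob R} (f : preseq R A B) := forall n, L0 (Dn n f).

Lemma Dseq_at_iff : forall n A B (f : preseq R A B), Dseq_at f n <-> L0 (Dn n f).
Proof.
  induction n; intros A B f.
  - split; intro H; exact H.
  - change (Dseq_at (Dps R f) n <-> L0 (Dn n (Dps R f))). apply IHn.
Qed.

Lemma Dseq_iff : forall A B (f : preseq R A B), Dseq R f <-> DS f.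
Proof.
  intros A B f. unfold DS. split; intros H n.
  - apply Dseq_at_iff. exact (H n).
  - apply (proj2 (Dseq_at_iff n A B f)). exact (H n).
Qed.

Lemma DS_Dps : forall A B (f : preseq R A B), DS f -> DS (Dps R f).
Proof. intros A B f H n. exact (H (S n)). Qed.

Lemma DS_Dn : forall n A B (f : preseq R A B), DS f -> DS (Dn n f).
Proof. induction n; intros A B f H. exact H. simpl. apply IHn, DS_Dps, H. Qed.

Lemma okS_Dps : forall A B (f : preseq R A B), okS f -> okS (Dps R f).
Proof. intros A B f H n. exact (H (S n)). Qed.

Lemma okS_Dn : forall n A B (f : preseq R A B), okS f -> okS (Dn n f).
Proof. induction n; intros A B f H. exact H. simpl. apply IHn, okS_Dps, H. Qed.

Lemma Dn_compps : forall n A B C (f : preseq R A B) (g : preseq R B C),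
  Dn n (compps R f g) = compps R (Tn R n f) (Dn n g).
Proof.
  induction n; intros. reflexivity.
  simpl. change (Dps R (compps R f g)) with (compps R (Tps R f) (Dps R g)).
  apply IHn.
Qed.

End Gen.

Section X.
Variable X : RawCLAC.
Hypothesis HX : is_CLAC X.

Local Notation "f ;; g" := (@comp X _ _ _ f g) (at level 40, left associativity).
Local Notation "f ++ g" := (@add X _ _ f g).

Lemma okc {A B C} (f : Hom X A B) (g : Hom X B C) : ok f -> ok g -> ok (f ;; g).
Proof. apply (ok_comp _ HX). Qed.
Lemma okpair {C A B} (f : Hom X C A) (g : Hom X C B) : ok f -> ok g -> ok (pair f g).
Proof. apply (ok_pair _ HX). Qed.
Lemma okadd {A B} (f g : Hom X A B) : ok f -> ok g -> ok (f ++ g).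
Proof. apply (ok_add _ HX). Qed.
Lemma okid (A : Ob X) : ok (idm (r:=X) A). Proof. apply (ok_id _ HX). Qed.
Lemma okzero (A B : Ob X) : ok (@zero X A B). Proof. apply (ok_zero _ HX). Qed.
Lemma okp0 (A B : Ob X) : ok (@p0 X A B). Proof. apply (ok_p0 _ HX). Qed.
Lemma okp1 (A B : Ob X) : ok (@p1 X A B). Proof. apply (ok_p1 _ HX). Qed.
Lemma okbang (A : Ob X) : ok (@bang X A). Proof. apply (ok_bang _ HX). Qed.
Lemma okcross {A B A' B'} (f : Hom X A A') (g : Hom X B B') : ok f -> ok g -> ok (cross X f g).
Proof. intros. unfold cross. apply okpair; apply okc; auto using okp0, okp1. Qed.
Lemma okPm {A B} (f : Hom X A B) : ok f -> ok (Pm X f).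
Proof. intros. apply okcross; auto. Qed.
Lemma okPnm n : forall A B (f : Hom X A B), ok f -> ok (Pnm n f).
Proof. induction n; intros; simpl; auto using okPm. Qed.
Lemma okiseq n : forall (A : Ob X), ok (iseq n A).
Proof. induction n; intros; simpl. apply okid. apply okc. apply IHn. apply okp1. Qed.

Ltac okt_ext := fail.
Ltac okt := solve [ repeat (first [ assumption | apply okc | apply okpair | apply okadd | apply okid
  | apply okzero | apply okp0 | apply okp1 | apply okbang | apply okPnm | apply okiseq | apply okPm
  | apply okcross | okt_ext ]) ].

Lemma assoc {A B C D} (f : Hom X A B) (g : Hom X B C) (h : Hom X C D) :
  ok f -> ok g -> ok h -> f ;; g ;; h = f ;; (g ;; h).
Proof. apply (comp_assoc _ HX). Qed.
Lemma idl {A B} (f : Hom X A B) : ok f -> idm A ;; f = f. Proof. apply (comp_id_l _ HX). Qed.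
Lemma idr {A B} (f : Hom X A B) : ok f -> f ;; idm B = f. Proof. apply (comp_id_r _ HX). Qed.
Lemma pp0 {C A B} (f : Hom X C A) (g : Hom X C B) : ok f -> ok g -> pair f g ;; p0 A B = f.
Proof. apply (pair_p0 _ HX). Qed.
Lemma pp1 {C A B} (f : Hom X C A) (g : Hom X C B) : ok f -> ok g -> pair f g ;; p1 A B = g.
Proof. apply (pair_p1 _ HX). Qed.
Lemma c0r {A B C} (f : Hom X A B) : ok f -> f ;; (@zero X B C) = zero.
Proof. apply (comp_0r _ HX). Qed.
Lemma caddr {A B C} (f : Hom X A B) (g h : Hom X B C) : ok f -> ok g -> ok h ->
  f ;; (g ++ h) = f ;; g ++ f ;; h.
Proof. apply (comp_addr _ HX). Qed.

Lemma pair_ext {C A B} (u v : Hom X C (prod X A B)) : ok u -> ok v ->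
  u ;; p0 A B = v ;; p0 A B -> u ;; p1 A B = v ;; p1 A B -> u = v.
Proof.
  intros. rewrite <- (pair_eta _ HX _ _ _ u), <- (pair_eta _ HX _ _ _ v) by auto.
  congruence.
Qed.

Lemma comp_pair {D C A B} (h : Hom X D C) (f : Hom X C A) (g : Hom X C B) :
  ok h -> ok f -> ok g -> h ;; pair f g = pair (h ;; f) (h ;; g).
Proof.
  intros. apply pair_ext; try okt.
  - rewrite assoc, !pp0 by okt. reflexivity.
  - rewrite assoc, !pp1 by okt. reflexivity.
Qed.

Lemma pair_zero {C A B} : pair (@zero X C A) (@zero X C B) = zero.
Proof.
  rewrite <- (pair_eta _ HX _ _ _ (@zero X C (prod X A B))) by okt.
  rewrite (p0_zero _ HX), (p1_zero _ HX). reflexivity.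
Qed.

Lemma pair_add {C A B} (f f' : Hom X C A) (g g' : Hom X C B) : ok f -> ok f' -> ok g -> ok g' ->
  pair (f ++ f') (g ++ g') = pair f g ++ pair f' g'.
Proof.
  intros. apply pair_ext; try okt.
  - rewrite (p0_add _ HX), !pp0 by okt. reflexivity.
  - rewrite (p1_add _ HX), !pp1 by okt. reflexivity.
Qed.

Lemma pair_cross {C A B A' B'} (f : Hom X C A) (g : Hom X C B) (a : Hom X A A') (b : Hom X B B') :
  ok f -> ok g -> ok a -> ok b -> pair f g ;; cross X a b = pair (f ;; a) (g ;; b).
Proof.
  intros. unfold cross. rewrite comp_pair by okt.
  rewrite <- !assoc, pp0, pp1 by okt. reflexivity.
Qed.

Lemma cross_p0 {A B A' B'} (a : Hom X A A') (b : Hom X B B') : ok a -> ok b ->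
  cross X a b ;; p0 A' B' = p0 A B ;; a.
Proof. intros. unfold cross. apply pp0; okt. Qed.
Lemma cross_p1 {A B A' B'} (a : Hom X A A') (b : Hom X B B') : ok a -> ok b ->
  cross X a b ;; p1 A' B' = p1 A B ;; b.
Proof. intros. unfold cross. apply pp1; okt. Qed.

Lemma cross_cross {A B A' B' A'' B''} (a : Hom X A A') (b : Hom X B B') (c : Hom X A' A'') (d : Hom X B' B'') :
  ok a -> ok b -> ok c -> ok d -> cross X a b ;; cross X c d = cross X (a ;; c) (b ;; d).
Proof.
  intros. unfold cross at 1. rewrite pair_cross by okt. unfold cross. rewrite !assoc by okt. reflexivity.
Qed.

Lemma Pm_comp {A B C} (f : Hom X A B) (g : Hom X B C) : ok f -> ok g -> Pm X (f ;; g) = Pm X f ;; Pm X g.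
Proof. intros. unfold Pm. symmetry. apply cross_cross; okt. Qed.

Lemma cross_id {A B} : cross X (idm A) (idm B) = idm (prod X A B).
Proof.
  apply pair_ext; try okt. rewrite cross_p0, idr, idl by okt; auto.
  rewrite cross_p1, idr, idl by okt; auto.
Qed.

Lemma Pm_id (A : Ob X) : Pm X (idm A) = idm (P A). Proof. apply cross_id. Qed.

Lemma Pnm_comp n : forall A B C (f : Hom X A B) (g : Hom X B C), ok f -> ok g ->
  Pnm n (f ;; g) = Pnm n f ;; Pnm n g.
Proof. induction n; intros; simpl. reflexivity. rewrite Pm_comp by okt. apply IHn; okt. Qed.

Lemma Pnm_id n : forall (A : Ob X), Pnm n (idm A) = idm (Pn n A).
Proof. induction n; intros; simpl. reflexivity. rewrite Pm_id. apply IHn. Qed.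

Lemma iseq_nat n : forall A B (h : Hom X A B), ok h -> Pnm n h ;; iseq n B = iseq n A ;; h.
Proof.
  induction n; intros; simpl.
  - rewrite idr, idl by okt. reflexivity.
  - rewrite <- assoc, IHn by okt. rewrite assoc by okt.
    replace (Pm X h ;; p1 B B) with (p1 A A ;; h). rewrite assoc by okt. reflexivity.
    symmetry. apply cross_p1; okt.
Qed.

Definition addit {A B} (k : Hom X A B) : Prop :=
  ok k /\ (forall C (f g : Hom X C A), ok f -> ok g -> (f ++ g) ;; k = f ;; k ++ g ;; k)
       /\ (forall C, (@zero X C A) ;; k = zero).

Lemma addit_ok {A B} (k : Hom X A B) : addit k -> ok k. Proof. intros [H _]; exact H. Qed.
Lemma addit_add {A B C} (k : Hom X A B) (f g : Hom X C A) : addit k -> ok f -> ok g ->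
   (f ++ g) ;; k = f ;; k ++ g ;; k.
Proof. intros [_ [H _]]. apply H. Qed.
Lemma addit_zero {A B C} (k : Hom X A B) : addit k -> (@zero X C A) ;; k = zero.
Proof. intros [_ [_ H]]. apply H. Qed.

Lemma addit_p0 (A B : Ob X) : addit (p0 A B).
Proof. split; [okt|split]; intros. apply (p0_add _ HX); auto. apply (p0_zero _ HX). Qed.
Lemma addit_p1 (A B : Ob X) : addit (p1 A B).
Proof. split; [okt|split]; intros. apply (p1_add _ HX); auto. apply (p1_zero _ HX). Qed.
Lemma addit_id (A : Ob X) : addit (idm A).
Proof. split; [okt|split]; intros. rewrite !idr by okt; auto. rewrite idr by okt; auto. Qed.
Lemma addit_comp {A B C} (h : Hom X A B) (k : Hom X B C) : addit h -> addit k -> addit (h ;; k).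
Proof.
  intros Hh Hk. pose proof (addit_ok _ Hh). pose proof (addit_ok _ Hk).
  split; [okt|split]; intros.
  - rewrite <- !assoc, (addit_add h), (addit_add k) by okt. reflexivity.
  - rewrite <- assoc, (addit_zero h), (addit_zero k) by okt. reflexivity.
Qed.
Lemma addit_pair {C A B} (f : Hom X C A) (g : Hom X C B) : addit f -> addit g -> addit (pair f g).
Proof.
  intros Hf Hg. pose proof (addit_ok _ Hf). pose proof (addit_ok _ Hg).
  split; [okt|split]; intros.
  - rewrite !comp_pair, (addit_add f), (addit_add g) by okt. apply pair_add; okt.
  - rewrite comp_pair, (addit_zero f), (addit_zero g) by okt. apply pair_zero.
Qed.
Lemma addit_zero_map (A B : Ob X) : addit (@zero X A B).
Proof. split; [okt|split]; intros.
  - rewrite !c0r by okt. rewrite (add_0l _ HX) by okt. reflexivity.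
  - apply c0r; okt. Qed.
Lemma addit_add_map {A B} (h k : Hom X A B) : addit h -> addit k -> addit (h ++ k).
Proof.
  intros Hh Hk. pose proof (addit_ok _ Hh). pose proof (addit_ok _ Hk).
  split; [okt|split]; intros.
  - rewrite !caddr, (addit_add h), (addit_add k) by okt.
    rewrite !(add_assoc _ HX) by okt. f_equal.
    rewrite <- !(add_assoc _ HX) by okt. f_equal. apply (add_comm _ HX); okt.
  - rewrite caddr, (addit_zero h), (addit_zero k) by okt. apply (add_0l _ HX); okt.
Qed.
Lemma addit_cross {A B A' B'} (a : Hom X A A') (b : Hom X B B') : addit a -> addit b -> addit (cross X a b).
Proof. intros. unfold cross. apply addit_pair; apply addit_comp; auto using addit_p0, addit_p1. Qed.
Lemma addit_Pm {A B} (h : Hom X A B) : addit h -> addit (Pm X h).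
Proof. intros. apply addit_cross; auto. Qed.
Lemma addit_Pnm n : forall A B (h : Hom X A B), addit h -> addit (Pnm n h).
Proof. induction n; intros; simpl; auto using addit_Pm. Qed.

End X.

Ltac okt_ext2 := fail.
Ltac okt2 := solve [ repeat (first [ assumption | progress (cbn [Pn]) | apply okc | apply okpair | apply okadd | apply okid
  | apply okzero | apply okp0 | apply okp1 | apply okbang | apply okPnm | apply okiseq | apply okPm
  | apply okcross | apply addit_ok; assumption | okt_ext2 ]) ].

From Corelib Require Import ssreflect.

Definition pairps (R : RawCLAC) {C A B : Ob R} (f : preseq R C A) (g : preseq R C B)
  : preseq R C (prod R A B) := fun n => pair (f n) (g n).
Definition iota (R : RawCLAC) {A B : Ob R} (h : Hom R A B) : preseq R A B :=
  fun n => comp (iseq n A) h.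

Lemma Dn_addps R n : forall A B (f g : preseq R A B), Dn n (addps R f g) = addps R (Dn n f) (Dn n g).
Proof. induction n; intros; simpl. reflexivity. apply (IHn _ _ (Dps R f) (Dps R g)). Qed.
Lemma Dn_zerops R n : forall (A B : Ob R), Dn n (zerops R (A:=A) (B:=B)) = zerops R.
Proof. induction n; intros; simpl. reflexivity. apply (IHn (P A) B). Qed.
Lemma Dn_pairps R n : forall C A B (f : preseq R C A) (g : preseq R C B),
  Dn n (pairps R f g) = pairps R (Dn n f) (Dn n g).
Proof. induction n; intros; simpl. reflexivity. apply (IHn _ _ _ (Dps R f) (Dps R g)). Qed.

Section X3.
Variable X : RawCLAC.
Hypothesis HX : is_CLAC X.
Local Notation "f ;; g" := (@comp X _ _ _ f g) (at level 40, left associativity).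
Local Notation "f ++ g" := (@add X _ _ f g).

Lemma okS_lact {A' A B} (h : Hom X A' A) (g : preseq X A B) : ok h -> okS X g -> okS X (lact X h g).
Proof. intros Hh Hg n. unfold lact. apply okc; auto. apply okPnm; auto. Qed.
Lemma okS_ract {A B C} (g : preseq X A B) (k : Hom X B C) : okS X g -> ok k -> okS X (ract X g k).
Proof. intros Hg Hk n. unfold ract. apply okc; auto. Qed.
Lemma okS_add {A B} (f g : preseq X A B) : okS X f -> okS X g -> okS X (addps X f g).
Proof. intros Hf Hg n. apply okadd; auto. Qed.
Lemma okS_zero {A B : Ob X} : okS X (zerops X (A:=A) (B:=B)).
Proof. intros n. apply okzero; auto. Qed.
Lemma okS_pairps {C A B} (f : preseq X C A) (g : preseq X C B) : okS X f -> okS X g -> okS X (pairps X f g).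
Proof. intros Hf Hg n. apply okpair; auto. Qed.
Lemma okS_Tps {A B} (f : preseq X A B) : okS X f -> okS X (Tps X f).
Proof. intros Hf n. unfold Tps. apply (okpair X HX). apply (okc X HX). apply (okPnm X HX), (okp0 X HX). exact (Hf _). exact (Hf (S n)). Qed.
Lemma okS_Tn n : forall A B (f : preseq X A B), okS X f -> okS X (Tn X n f).
Proof. induction n; intros; simpl; auto. apply IHn, okS_Tps; auto. Qed.
Lemma okS_compps {A B C} (f : preseq X A B) (g : preseq X B C) : okS X f -> okS X g -> okS X (compps X f g).
Proof. intros Hf Hg n. unfold compps. apply okc; auto. apply okS_Tn; auto. Qed.
Lemma okS_iota {A B} (h : Hom X A B) : ok h -> okS X (iota X h).
Proof. intros Hh n. unfold iota. apply okc; auto. apply okiseq; auto. Qed.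

Ltac okt_ext2 ::= first [
   match goal with |- ok (?g ?m) => refine ((_ : okS X g) m) end
 | apply okS_lact | apply okS_ract | apply okS_add | apply okS_zero | apply okS_pairps
 | apply okS_Tps | apply okS_Tn | apply okS_compps | apply okS_iota | apply okS_Dps | apply okS_Dn ].
Ltac okt := okt2.

Definition T0 {A B} n (f : preseq X A B) : Hom X (Pn n A) (Pn n B) := Tn X n f 0.
Lemma okT0 {A B} n (f : preseq X A B) : okS X f -> ok (T0 n f).
Proof. intros. unfold T0. apply (okS_Tn n _ _ f H 0). Qed.
Ltac okt_ext2 ::= first [ apply okT0
 | match goal with |- ok (?g ?m) => refine ((_ : okS X g) m) end
 | apply okS_lact | apply okS_ract | apply okS_add | apply okS_zero | apply okS_pairps
 | apply okS_Tps | apply okS_Tn | apply okS_compps | apply okS_iota | apply okS_Dps | apply okS_Dn ].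
Lemma compps_eq {A B C} (f : preseq X A B) (g : preseq X B C) n : compps X f g n = T0 n f ;; g n.
Proof. reflexivity. Qed.
Lemma T0_S {A B} n (f : preseq X A B) : T0 (S n) f = T0 n (Tps X f).
Proof. reflexivity. Qed.

Lemma Tps_eq {A B} (f : preseq X A B) : Tps X f = pairps X (lact X (p0 A A) f) (Dps X f).
Proof. reflexivity. Qed.

Lemma lact_comp {A'' A' A B} (h : Hom X A'' A') (k : Hom X A' A) (g : preseq X A B) :
  ok h -> ok k -> okS X g -> lact X (h ;; k) g = lact X h (lact X k g).
Proof. intros. extensionality n. unfold lact. rewrite Pnm_comp; try okt; rewrite assoc; try okt. reflexivity. Qed.
Lemma lact_id {A B} (g : preseq X A B) : okS X g -> lact X (idm A) g = g.
Proof. intros. extensionality n. unfold lact. rewrite Pnm_id; try okt; rewrite idl; try okt. reflexivity. Qed.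
Lemma lact_add {A' A B} (h : Hom X A' A) (f g : preseq X A B) : ok h -> okS X f -> okS X g ->
  lact X h (addps X f g) = addps X (lact X h f) (lact X h g).
Proof. intros. extensionality n. unfold lact, addps. apply caddr; okt. Qed.
Lemma lact_zero {A' A B} (h : Hom X A' A) : ok h -> lact X h (zerops X (B:=B)) = zerops X.
Proof. intros. extensionality n. unfold lact, zerops. apply c0r; okt. Qed.
Lemma lact_pairps {A' C A B} (h : Hom X A' C) (f : preseq X C A) (g : preseq X C B) : ok h -> okS X f -> okS X g ->
  lact X h (pairps X f g) = pairps X (lact X h f) (lact X h g).
Proof. intros. extensionality n. unfold lact, pairps. apply comp_pair; okt. Qed.
Lemma lact_ract {A' A B C} (h : Hom X A' A) (f : preseq X A B) (k : Hom X B C) : ok h -> okS X f -> ok k ->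
  lact X h (ract X f k) = ract X (lact X h f) k.
Proof. intros. extensionality n. unfold lact, ract. symmetry. apply assoc; okt. Qed.
Lemma ract_comp {A B C D} (f : preseq X A B) (k : Hom X B C) (l : Hom X C D) : okS X f -> ok k -> ok l ->
  ract X f (k ;; l) = ract X (ract X f k) l.
Proof. intros. extensionality n. unfold ract. symmetry. apply assoc; okt. Qed.

Lemma Dn_lact n : forall A' A B (h : Hom X A' A) (f : preseq X A B),
  Dn n (lact X h f) = lact X (Pnm n h) (Dn n f).
Proof.
  induction n; intros; simpl. reflexivity.
  change (Dps X (lact X h f)) with (lact X (Pm X h) (Dps X f)). apply IHn.
Qed.

Lemma Tps_lact {A' A B} (h : Hom X A' A) (f : preseq X A B) : ok h -> okS X f ->
  Tps X (lact X h f) = lact X (Pm X h) (Tps X f).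
Proof.
  intros. extensionality n. unfold Tps, lact. rewrite comp_pair; try okt. f_equal.
  rewrite -!assoc; try okt. f_equal. rewrite -!Pnm_comp; try okt. f_equal.
  unfold Pm. symmetry. apply cross_p0; okt.
Qed.
Lemma Tn_lact n : forall A' A B (h : Hom X A' A) (f : preseq X A B), ok h -> okS X f ->
  Tn X n (lact X h f) = lact X (Pnm n h) (Tn X n f).
Proof.
  induction n; intros; simpl. reflexivity.
  rewrite Tps_lact; try okt. apply IHn; okt.
Qed.
Lemma Tn0_lact n {A' A B} (h : Hom X A' A) (f : preseq X A B) : ok h -> okS X f ->
  T0 n (lact X h f) = Pnm n h ;; T0 n f.
Proof. intros. unfold T0. rewrite Tn_lact; try okt. reflexivity. Qed.

Lemma Tps_ract {A B C} (f : preseq X A B) (k : Hom X B C) : okS X f -> ok k ->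
  Tps X (ract X f k) = ract X (Tps X f) (Pm X k).
Proof.
  intros. extensionality n. unfold Tps, ract. unfold Pm. rewrite pair_cross; try okt.
  rewrite assoc; try okt. reflexivity.
Qed.
Lemma Tn_ract n : forall A B C (f : preseq X A B) (k : Hom X B C), okS X f -> ok k ->
  Tn X n (ract X f k) = ract X (Tn X n f) (Pnm n k).
Proof.
  induction n; intros; simpl. reflexivity.
  rewrite Tps_ract; try okt. apply IHn; okt.
Qed.
Lemma Tn0_ract n {A B C} (f : preseq X A B) (k : Hom X B C) : okS X f -> ok k ->
  T0 n (ract X f k) = T0 n f ;; Pnm n k.
Proof. intros. unfold T0. rewrite Tn_ract; try okt. reflexivity. Qed.

Lemma compps_lact {A' A B C} (h : Hom X A' A) (f : preseq X A B) (g : preseq X B C) : ok h -> okS X f -> okS X g ->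
  compps X (lact X h f) g = lact X h (compps X f g).
Proof. intros. extensionality n. rewrite compps_eq. unfold lact. rewrite Tn0_lact; try okt. apply assoc; okt. Qed.
Lemma compps_ract {A B C D} (f : preseq X A B) (k : Hom X B C) (g : preseq X C D) : okS X f -> ok k -> okS X g ->
  compps X (ract X f k) g = compps X f (lact X k g).
Proof. intros. extensionality n. rewrite compps_eq. unfold lact. rewrite Tn0_ract; try okt. apply assoc; okt. Qed.
Lemma compps_ract2 {A B C D} (f : preseq X A B) (g : preseq X B C) (k : Hom X C D) : okS X f -> okS X g -> ok k ->
  compps X f (ract X g k) = ract X (compps X f g) k.
Proof. intros. extensionality n. rewrite compps_eq. unfold ract. symmetry. apply assoc; okt. Qed.
Lemma compps_addr {A B C} (f : preseq X A B) (g h : preseq X B C) : okS X f -> okS X g -> okS X h ->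
  compps X f (addps X g h) = addps X (compps X f g) (compps X f h).
Proof. intros. extensionality n. unfold addps. rewrite !compps_eq. apply caddr; okt. Qed.
Lemma compps_zeror {A B C} (f : preseq X A B) : okS X f -> compps X f (zerops X (B:=C)) = zerops X.
Proof. intros. extensionality n. unfold zerops. rewrite compps_eq. apply c0r; okt. Qed.

Lemma Tn0_iseq n : forall A B (f : preseq X A B), okS X f -> T0 n f ;; iseq n B = f n.
Proof.
  induction n; intros.
  - unfold T0. simpl. apply idr; okt.
  - rewrite T0_S. change (iseq (S n) B) with (iseq n (P B) ;; p1 B B).
    rewrite -assoc; try okt. rewrite IHn; try okt. unfold Tps. apply pp1; okt.
Qed.

Lemma compps_iota {A B C} (f : preseq X A B) (h : Hom X B C) : okS X f -> ok h ->
  compps X f (iota X h) = ract X f h.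
Proof. intros. extensionality n. rewrite compps_eq. unfold iota, ract. rewrite -assoc; try okt; rewrite Tn0_iseq; try okt. reflexivity. Qed.

Lemma Tps_iota {A B} (h : Hom X A B) : ok h -> Tps X (iota X h) = iota X (Pm X h).
Proof.
  intros. extensionality n. unfold Tps, iota. simpl.
  apply pair_ext; try okt.
  - rewrite pp0; try okt. rewrite -assoc; try okt; rewrite iseq_nat; try okt. rewrite !assoc; try okt. f_equal.
    unfold Pm. symmetry. apply cross_p0; okt.
  - rewrite pp1; try okt. rewrite !assoc; try okt. f_equal.
    unfold Pm. symmetry. apply cross_p1; okt.
Qed.
Lemma Tn_iota n : forall A B (h : Hom X A B), ok h -> Tn X n (iota X h) = iota X (Pnm n h).
Proof. induction n; intros; simpl. reflexivity. rewrite Tps_iota; try okt. apply IHn; okt. Qed.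
Lemma Tn0_iota n {A B} (h : Hom X A B) : ok h -> T0 n (iota X h) = Pnm n h.
Proof. intros. unfold T0. rewrite Tn_iota; try okt. unfold iota. simpl. apply idl; okt. Qed.

Lemma compps_iota_l {A B C} (h : Hom X A B) (g : preseq X B C) : ok h -> okS X g ->
  compps X (iota X h) g = lact X h g.
Proof. intros. extensionality n. rewrite compps_eq. unfold lact. rewrite Tn0_iota; try okt. reflexivity. Qed.

Lemma lact_iota {A' A B} (k : Hom X A' A) (h : Hom X A B) : ok k -> ok h ->
  lact X k (iota X h) = iota X (k ;; h).
Proof. intros. extensionality n. unfold lact, iota. rewrite -assoc; try okt; rewrite iseq_nat; try okt; rewrite assoc; try okt. reflexivity. Qed.
Lemma Dps_iota {A B} (h : Hom X A B) : ok h -> Dps X (iota X h) = iota X (p1 A A ;; h).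
Proof. intros. extensionality n. unfold Dps, iota. simpl. apply assoc; okt. Qed.
Lemma ract_iota {A B C} (h : Hom X A B) (k : Hom X B C) : ok h -> ok k ->
  ract X (iota X h) k = iota X (h ;; k).
Proof. intros. extensionality n. unfold ract, iota. apply assoc; okt. Qed.

Lemma Tps_compps {A B C} (f : preseq X A B) (g : preseq X B C) : okS X f -> okS X g ->
  Tps X (compps X f g) = compps X (Tps X f) (Tps X g).
Proof.
  intros. extensionality n.
  change (Tps X (compps X f g) n) with (pair (Pnm n (p0 A A) ;; compps X f g n) (compps X f g (S n))).
  rewrite !compps_eq. rewrite T0_S.
  change (Tps X g n) with (pair (Pnm n (p0 B B) ;; g n) (g (S n))).
  rewrite comp_pair; try okt. f_equal.
  rewrite -!assoc; try okt. f_equal.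
  rewrite -Tn0_ract; try okt.
  replace (ract X (Tps X f) (p0 B B)) with (lact X (p0 A A) f).
  - rewrite Tn0_lact; try okt. reflexivity.
  - extensionality m. unfold ract, Tps, lact. symmetry. apply pp0; okt.
Qed.
Lemma Tn_compps n : forall A B C (f : preseq X A B) (g : preseq X B C), okS X f -> okS X g ->
  Tn X n (compps X f g) = compps X (Tn X n f) (Tn X n g).
Proof. induction n; intros; simpl. reflexivity. rewrite Tps_compps; try okt. apply IHn; okt. Qed.

Lemma compps_assoc {A B C D} (f : preseq X A B) (g : preseq X B C) (h : preseq X C D) :
  okS X f -> okS X g -> okS X h -> compps X (compps X f g) h = compps X f (compps X g h).
Proof.
  intros. extensionality n. rewrite !compps_eq. unfold T0 at 1. rewrite Tn_compps; try okt.
  rewrite compps_eq. apply assoc; okt.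
Qed.

End X3.

Section X4.
Variable X : RawCLAC.
Hypothesis HX : is_CLAC X.
Local Notation "f ;; g" := (@comp X _ _ _ f g) (at level 40, left associativity).
Local Notation "f ++ g" := (@add X _ _ f g).

Ltac okt_ext2 ::= match goal with
 | |- ok (T0 _ _ _) => apply okT0
 | |- ok (?g ?m) => refine ((_ : okS X g) m)
 | |- okS _ (lact _ _ _) => apply okS_lact
 | |- okS _ (ract _ _ _) => apply okS_ract
 | |- okS _ (addps _ _ _) => apply okS_add
 | |- okS _ (zerops _) => apply okS_zero
 | |- okS _ (pairps _ _ _) => apply okS_pairps
 | |- okS _ (Tps _ _) => apply okS_Tps
 | |- okS _ (Tn _ _ _) => apply okS_Tn
 | |- okS _ (compps _ _ _) => apply okS_compps
 | |- okS _ (iota _ _) => apply okS_iota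
 | |- okS _ (Dps _ _) => apply okS_Dps
 | |- okS _ (Dn _ _) => apply okS_Dn
 end.
Ltac okt := okt2.

Lemma pp0r {C A B D} (f : Hom X C A) (g : Hom X C B) (h : Hom X A D) : ok f -> ok g -> ok h ->
  pair f g ;; (p0 A B ;; h) = f ;; h.
Proof. intros. rewrite -assoc; try okt. rewrite pp0; try okt. reflexivity. Qed.
Lemma pp1r {C A B D} (f : Hom X C A) (g : Hom X C B) (h : Hom X B D) : ok f -> ok g -> ok h ->
  pair f g ;; (p1 A B ;; h) = g ;; h.
Proof. intros. rewrite -assoc; try okt. rewrite pp1; try okt. reflexivity. Qed.
Lemma p0z {C A B} : (@zero X C (prod X A B)) ;; p0 A B = zero. Proof. apply (p0_zero _ HX). Qed.
Lemma p1z {C A B} : (@zero X C (prod X A B)) ;; p1 A B = zero. Proof. apply (p1_zero _ HX). Qed.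
Lemma p0zr {C A B D} (h : Hom X A D) : ok h -> (@zero X C (prod X A B)) ;; (p0 A B ;; h) = zero ;; h.
Proof. intros. rewrite -assoc; try okt. rewrite p0z. reflexivity. Qed.
Lemma p1zr {C A B D} (h : Hom X B D) : ok h -> (@zero X C (prod X A B)) ;; (p1 A B ;; h) = zero ;; h.
Proof. intros. rewrite -assoc; try okt. rewrite p1z. reflexivity. Qed.
Lemma Pnm_fuse n {A B C} (a : Hom X A B) (b : Hom X B C) : ok a -> ok b -> Pnm n a ;; Pnm n b = Pnm n (a ;; b).
Proof. intros. symmetry. apply Pnm_comp; okt. Qed.
Lemma Pnm_fuser n {A B C D} (a : Hom X A B) (b : Hom X B C) (h : Hom X (Pn n C) D) : ok a -> ok b -> ok h ->
  Pnm n a ;; (Pnm n b ;; h) = Pnm n (a ;; b) ;; h.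
Proof. intros. rewrite -assoc; try okt. rewrite Pnm_fuse; try okt. reflexivity. Qed.
Lemma zero_add {A B} (f : Hom X A B) : ok f -> zero ++ f = f. Proof. apply (add_0l _ HX). Qed.
Lemma add_zero {A B} (f : Hom X A B) : ok f -> f ++ zero = f.
Proof. intros. rewrite (add_comm _ HX); try okt. apply zero_add; okt. Qed.

Ltac rwok L := rewrite L; try okt; (let n := numgoals in guard n <= 1).
Ltac simp1 := first [ rwok assoc | rwok pp0 | rwok pp1 | rwok pp0r | rwok pp1r | rwok idl | rwok idr
  | rwok c0r | rwok p0z | rwok p1z | rwok p0zr | rwok p1zr | rwok comp_pair | rwok caddr
  | rwok Pnm_fuse | rwok Pnm_fuser | rwok Pnm_id | rwok zero_add | rwok add_zero ].
Ltac simp := repeat simp1.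


Ltac meq := simp; repeat (apply pair_ext; try okt; simp); try reflexivity.

Lemma lact_n {A' A B} (h : Hom X A' A) (g : preseq X A B) n : lact X h g n = Pnm n h ;; g n.
Proof. reflexivity. Qed.
Lemma Dps_addps {A B} (f g : preseq X A B) : Dps X (addps X f g) = addps X (Dps X f) (Dps X g).
Proof. reflexivity. Qed.
Lemma Dps_zerops {A B : Ob X} : Dps X (zerops X (A:=A) (B:=B)) = zerops X.
Proof. reflexivity. Qed.
Lemma Dps_pairps {C A B} (f : preseq X C A) (g : preseq X C B) : Dps X (pairps X f g) = pairps X (Dps X f) (Dps X g).
Proof. reflexivity. Qed.
Lemma Dps_lact {A' A B} (h : Hom X A' A) (f : preseq X A B) : Dps X (lact X h f) = lact X (Pm X h) (Dps X f).
Proof. reflexivity. Qed.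

Lemma add4 {A B} (a b c d : Hom X A B) : ok a -> ok b -> ok c -> ok d ->
  (a ++ b) ++ (c ++ d) = (a ++ c) ++ (b ++ d).
Proof.
  intros. rewrite (add_assoc _ HX); try okt. rewrite (add_assoc _ HX _ _ a c); try okt. f_equal.
  rewrite -(add_assoc _ HX); try okt. rewrite -(add_assoc _ HX _ _ c); try okt. f_equal.
  apply (add_comm _ HX); okt.
Qed.

Lemma L0_zero {A B : Ob X} : L0 X (zerops X (A:=A) (B:=B)).
Proof.
  unfold L0. rewrite !Dps_zerops !lact_zero; try okt. split; [|split;[|split]]; try reflexivity.
  extensionality n. unfold addps, zerops. rewrite zero_add; try okt. reflexivity.
Qed.

Lemma L0_add {A B} (f g : preseq X A B) : okS X f -> okS X g -> L0 X f -> L0 X g -> L0 X (addps X f g).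
Proof.
  intros Of Og [f1 [f2 [f3 f4]]] [g1 [g2 [g3 g4]]].
  unfold L0. rewrite !Dps_addps.
  split; [|split;[|split]].
  - rewrite lact_add; try okt. rewrite f1 g1. extensionality n. unfold addps, zerops. apply zero_add; okt.
  - rewrite !lact_add; try okt. rewrite f2 g2. extensionality n. unfold addps. apply add4; okt.
  - rewrite lact_add; try okt. rewrite f3 g3. reflexivity.
  - rewrite lact_add; try okt. rewrite f4 g4. reflexivity.
Qed.

Lemma L0_pairps {C A B} (f : preseq X C A) (g : preseq X C B) : okS X f -> okS X g -> L0 X f -> L0 X g ->
  L0 X (pairps X f g).
Proof.
  intros Of Og [f1 [f2 [f3 f4]]] [g1 [g2 [g3 g4]]].
  unfold L0. rewrite !Dps_pairps.
  split; [|split;[|split]].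
  - rewrite lact_pairps; try okt. rewrite f1 g1. extensionality n. unfold pairps, zerops. apply pair_zero; okt.
  - rewrite !lact_pairps; try okt. rewrite f2 g2. extensionality n. unfold addps, pairps. apply pair_add; okt.
  - rewrite lact_pairps; try okt. rewrite f3 g3. reflexivity.
  - rewrite lact_pairps; try okt. rewrite f4 g4. reflexivity.
Qed.

Lemma L0_lact {A' A B} (k : Hom X A' A) (f : preseq X A B) : addit X k -> okS X f -> L0 X f ->
  L0 X (lact X k f).
Proof.
  intros Hk Of [f1 [f2 [f3 f4]]]. pose proof (addit_ok X k Hk) as Ok.
  unfold L0. rewrite !Dps_lact.
  split; [|split;[|split]].
  - rewrite -lact_comp; try okt.
    replace (pair (idm A') (@zero X A' A') ;; Pm X k) with (k ;; pair (idm A) (@zero X A A)).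
    + rewrite lact_comp; try okt. rewrite f1 lact_zero; try okt. reflexivity.
    + meq. rewrite (addit_zero X k); auto.
  - rewrite -!lact_comp; try okt.
    replace (cross X (idm A') (p0 A' A' ++ p1 A' A') ;; Pm X k)
       with (cross X k (Pm X k) ;; cross X (idm A) (p0 A A ++ p1 A A)).
    replace (cross X (idm A') (p0 A' A') ;; Pm X k) with (cross X k (Pm X k) ;; cross X (idm A) (p0 A A)).
    replace (cross X (idm A') (p1 A' A') ;; Pm X k) with (cross X k (Pm X k) ;; cross X (idm A) (p1 A A)).
    + rewrite !lact_comp; try okt. rewrite f2 lact_add; try okt. reflexivity.
    + meq.
    + meq.
    + meq. all: rewrite (addit_add X k); try okt; meq.
  - rewrite -lact_comp; try okt.
    replace (ellmap X A' ;; Pm X (Pm X k)) with (Pm X k ;; ellmap X A).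
    + rewrite lact_comp; try okt. rewrite f3. reflexivity.
    + unfold ellmap. meq. all: rewrite (addit_zero X k Hk); meq.
  - rewrite -lact_comp; try okt.
    replace (cmap X A' ;; Pm X (Pm X k)) with (Pm X (Pm X k) ;; cmap X A).
    + rewrite lact_comp; try okt. rewrite f4. reflexivity.
    + unfold cmap. meq.
Qed.

Lemma test_cmap (Y : Ob X) : cmap X Y ;; cmap X Y = idm _.
Proof.
  unfold cmap. meq.
Qed.

End X4.

Section X5.
Variable X : RawCLAC.
Hypothesis HX : is_CLAC X.
Local Notation "f ;; g" := (@comp X _ _ _ f g) (at level 40, left associativity).
Local Notation "f ++ g" := (@add X _ _ f g).

Ltac okt_ext2 ::= match goal with
 | |- ok (T0 _ _ _) => apply okT0
 | |- ok (?g ?m) => refine ((_ : okS X g) m)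
 | |- okS _ (lact _ _ _) => apply okS_lact
 | |- okS _ (ract _ _ _) => apply okS_ract
 | |- okS _ (addps _ _ _) => apply okS_add
 | |- okS _ (zerops _) => apply okS_zero
 | |- okS _ (pairps _ _ _) => apply okS_pairps
 | |- okS _ (Tps _ _) => apply okS_Tps
 | |- okS _ (Tn _ _ _) => apply okS_Tn
 | |- okS _ (compps _ _ _) => apply okS_compps
 | |- okS _ (iota _ _) => apply okS_iota
 | |- okS _ (Dps _ _) => apply okS_Dps
 | |- okS _ (Dn _ _) => apply okS_Dn
 end.
Ltac okt := okt2.

Ltac rwok L := rewrite L; try okt; (let n := numgoals in guard n <= 1).
Lemma pair_eta_l {C A B} (h : Hom X C (prod X A B)) : ok h -> pair (h ;; p0 A B) (h ;; p1 A B) = h.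
Proof. apply (pair_eta _ HX). Qed.
Lemma pair_p01 {A B : Ob X} : pair (p0 A B) (p1 A B) = idm (prod X A B).
Proof. apply pair_ext; try okt. rewrite pp0; try okt. rewrite idl; try okt. reflexivity.
  rewrite pp1; try okt. rewrite idl; try okt. reflexivity. Qed.
Ltac simp1 := first [ rwok pair_eta_l | rwok pair_p01 | rwok assoc | rwok pp0 | rwok pp1 | rwok pp0r | rwok pp1r | rwok idl | rwok idr
  | rwok c0r | rwok p0z | rwok p1z | rwok p0zr | rwok p1zr | rwok comp_pair | rwok caddr
  | rwok Pnm_fuse | rwok Pnm_fuser | rwok Pnm_id | rwok zero_add | rwok add_zero ].
Ltac simp := repeat simp1.


Ltac meq := simp; repeat (apply pair_ext; try okt; simp); try reflexivity.


Lemma L0_iota {A B} (h : Hom X A B) : addit X h -> L0 X (iota X h).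
Proof.
  intros Hh. pose proof (addit_ok X h Hh) as Oh.
  unfold L0. rewrite !Dps_iota; try okt. rewrite !lact_iota; try okt.
  split; [|split;[|split]]; f_equal.
  - extensionality n. unfold iota, zerops. meq. rewrite (addit_zero X h Hh). apply c0r; okt.
  - extensionality n. unfold iota, addps. rewrite -caddr; try okt. f_equal. meq.
    rewrite (addit_add X h _ _ Hh); try okt. meq.
  - meq.
  - unfold cmap. meq.
Qed.


Lemma Dps_compps {A B C} (f : preseq X A B) (g : preseq X B C) : Dps X (compps X f g) = compps X (Tps X f) (Dps X g).
Proof. reflexivity. Qed.

Lemma N1 {A B} (f : preseq X A B) : okS X f ->
  lact X (pair (idm A) zero) (Dps X f) = zerops X ->
  lact X (pair (idm A) (@zero X A A)) (Tps X f) = ract X f (pair (idm B) (@zero X B B)).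
Proof.
  intros Of H1. extensionality n.
  have H := f_equal (fun u => u n) H1. cbv beta in H.
  change (Pnm n (pair (idm A) (@zero X A A)) ;; f (S n) = zero) in H.
  rewrite lact_n. unfold ract.
  change (Tps X f n) with (pair (Pnm n (p0 A A) ;; f n) (f (S n))).
  rewrite (comp_pair _ _ (Pnm n _)); try okt. rewrite H. meq.
Qed.

Definition T2 {A B} (f : preseq X A B) : preseq X (prod X A (P A)) (prod X B (P B)) :=
  fun n => pair (Pnm n (p0 A (P A)) ;; f n)
                (pair (Pnm n (cross X (idm A) (p0 A A)) ;; f (S n)) (Pnm n (cross X (idm A) (p1 A A)) ;; f (S n))).
Lemma okS_T2 {A B} (f : preseq X A B) : okS X f -> okS X (T2 f).
Proof. intros Of n. unfold T2. okt. Qed.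
Ltac okt_ext2 ::= match goal with
 | |- ok (T0 _ _ _) => apply okT0
 | |- ok (?g ?m) => refine ((_ : okS X g) m)
 | |- okS _ (lact _ _ _) => apply okS_lact
 | |- okS _ (ract _ _ _) => apply okS_ract
 | |- okS _ (addps _ _ _) => apply okS_add
 | |- okS _ (zerops _) => apply okS_zero
 | |- okS _ (pairps _ _ _) => apply okS_pairps
 | |- okS _ (Tps _ _) => apply okS_Tps
 | |- okS _ (Tn _ _ _) => apply okS_Tn
 | |- okS _ (compps _ _ _) => apply okS_compps
 | |- okS _ (iota _ _) => apply okS_iota
 | |- okS _ (Dps _ _) => apply okS_Dps
 | |- okS _ (Dn _ _) => apply okS_Dn
 | |- okS _ (T2 _) => apply okS_T2
 end.


Lemma TA {A B} (f : preseq X A B) : okS X f ->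
  lact X (cross X (idm A) (p0 A A ++ p1 A A)) (Dps X f)
     = addps X (lact X (cross X (idm A) (p0 A A)) (Dps X f))
               (lact X (cross X (idm A) (p1 A A)) (Dps X f)) ->
  lact X (cross X (idm A) (p0 A A ++ p1 A A)) (Tps X f) = ract X (T2 f) (cross X (idm B) (p0 B B ++ p1 B B)).
Proof.
  intros Of H2. extensionality n.
  have H := f_equal (fun u => u n) H2. cbv beta in H.
  change (Pnm n (cross X (idm A) (p0 A A ++ p1 A A)) ;; f (S n) =
     Pnm n (cross X (idm A) (p0 A A)) ;; f (S n) ++ Pnm n (cross X (idm A) (p1 A A)) ;; f (S n)) in H.
  rewrite lact_n. unfold ract, T2.
  change (Tps X f n) with (pair (Pnm n (p0 A A) ;; f n) (f (S n))).
  rewrite (comp_pair _ _ (Pnm n _)); try okt. rewrite H. meq.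
Qed.

Lemma TB0 {A B} (f : preseq X A B) : okS X f ->
  lact X (cross X (idm A) (p0 A A)) (Tps X f) = ract X (T2 f) (cross X (idm B) (p0 B B)).
Proof.
  intros Of. extensionality n. rewrite lact_n. unfold ract, T2.
  change (Tps X f n) with (pair (Pnm n (p0 A A) ;; f n) (f (S n))).
  rewrite (comp_pair _ _ (Pnm n _)); try okt. meq.
Qed.
Lemma TB1 {A B} (f : preseq X A B) : okS X f ->
  lact X (cross X (idm A) (p1 A A)) (Tps X f) = ract X (T2 f) (cross X (idm B) (p1 B B)).
Proof.
  intros Of. extensionality n. rewrite lact_n. unfold ract, T2.
  change (Tps X f n) with (pair (Pnm n (p0 A A) ;; f n) (f (S n))).
  rewrite (comp_pair _ _ (Pnm n _)); try okt. meq.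
Qed.

Lemma N4 {A B} (f : preseq X A B) : okS X f ->
  lact X (cmap X A) (Dps X (Dps X f)) = Dps X (Dps X f) ->
  lact X (cmap X A) (Tps X (Tps X f)) = ract X (Tps X (Tps X f)) (cmap X B).
Proof.
  intros Of H4. extensionality n.
  have H := f_equal (fun u => u n) H4. cbv beta in H.
  change (Pnm n (cmap X A) ;; f (S (S n)) = f (S (S n))) in H.
  rewrite lact_n. unfold ract.
  change (Tps X (Tps X f) n) with
    (pair (Pnm n (p0 (P A) (P A)) ;; pair (Pnm n (p0 A A) ;; f n) (f (S n)))
          (pair (Pnm n (Pm X (p0 A A)) ;; f (S n)) (f (S (S n))))).
  simp. rewrite H. meq.
Qed.

Lemma N3 {A B} (f : preseq X A B) : okS X f ->
  lact X (pair (idm A) zero) (Dps X f) = zerops X ->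
  lact X (ellmap X A) (Dps X (Dps X f)) = Dps X f ->
  lact X (ellmap X A) (Tps X (Tps X f)) = ract X (Tps X f) (ellmap X B).
Proof.
  intros Of H1 H3. extensionality n.
  have N1n := f_equal (fun u => u n) (N1 f Of H1). cbv beta in N1n.
  rewrite lact_n in N1n. unfold ract in N1n.
  have H1n := f_equal (fun u => u n) H1. cbv beta in H1n.
  change (Pnm n (pair (idm A) (@zero X A A)) ;; f (S n) = zero) in H1n.
  have H3n := f_equal (fun u => u n) H3. cbv beta in H3n.
  change (Pnm n (ellmap X A) ;; f (S (S n)) = f (S n)) in H3n.
  have E1 : ellmap X A ;; p0 (P A) (P A) = p0 A A ;; pair (idm A) (@zero X A A).
  { unfold ellmap. meq. }
  have E2 : ellmap X A ;; Pm X (p0 A A) = p0 A A ;; pair (idm A) (@zero X A A).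
  { unfold ellmap. meq. }
  rewrite lact_n. unfold ract.
  change (Tps X (Tps X f) n) with
    (pair (Pnm n (p0 (P A) (P A)) ;; Tps X f n)
          (pair (Pnm n (Pm X (p0 A A)) ;; f (S n)) (f (S (S n))))).
  rewrite (comp_pair _ _ (Pnm n (ellmap X A))); try okt.
  rewrite (comp_pair _ _ (Pnm n (ellmap X A))); try okt.
  rewrite (Pnm_fuser _ _ n (ellmap X A) (p0 (P A) (P A))); try okt.
  rewrite (Pnm_fuser _ _ n (ellmap X A) (Pm X (p0 A A))); try okt.
  rewrite E1 E2. rewrite Pnm_comp; try okt.
  rewrite (assoc _ _ (Pnm n (p0 A A))); try okt.
  rewrite (assoc _ _ (Pnm n (p0 A A))); try okt.
  rewrite N1n H1n H3n.
  change (Tps X f n) with (pair (Pnm n (p0 A A) ;; f n) (f (S n))).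
  unfold ellmap. meq.
Qed.

Lemma L0_compps {A B C} (f : preseq X A B) (g : preseq X B C) : okS X f -> okS X g -> L0 X f -> L0 X g ->
  L0 X (compps X f g).
Proof.
  intros Of Og [f1 [f2 [f3 f4]]] [g1 [g2 [g3 g4]]].
  have Tf : okS X (Tps X f) by okt.
  unfold L0. rewrite !Dps_compps.
  split; [|split;[|split]].
  - rewrite -compps_lact; try okt. rewrite N1; try okt. rewrite compps_ract; try okt.
    rewrite g1. apply compps_zeror; okt.
  - rewrite -!compps_lact; try okt. rewrite TA; try okt. rewrite TB0; try okt. rewrite TB1; try okt.
    rewrite !compps_ract; try okt. rewrite g2. apply compps_addr; try okt; apply okS_T2; auto.
  - rewrite -compps_lact; try okt. rewrite N3; try okt. rewrite compps_ract; try okt.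
    rewrite g3. reflexivity.
  - rewrite -compps_lact; try okt. rewrite N4; try okt. rewrite compps_ract; try okt.
    rewrite g4. reflexivity.
Qed.

End X5.

Section X6.
Variable X : RawCLAC.
Hypothesis HX : is_CLAC X.
Local Notation "f ;; g" := (@comp X _ _ _ f g) (at level 40, left associativity).
Local Notation "f ++ g" := (@add X _ _ f g).

Ltac okt_ext2 ::= match goal with
 | |- ok (T0 _ _ _) => apply okT0
 | |- ok (?g ?m) => refine ((_ : okS X g) m)
 | |- okS _ (lact _ _ _) => apply okS_lact
 | |- okS _ (ract _ _ _) => apply okS_ract
 | |- okS _ (addps _ _ _) => apply okS_add
 | |- okS _ (zerops _) => apply okS_zero
 | |- okS _ (pairps _ _ _) => apply okS_pairps
 | |- okS _ (Tps _ _) => apply okS_Tps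
 | |- okS _ (Tn _ _ _) => apply okS_Tn
 | |- okS _ (compps _ _ _) => apply okS_compps
 | |- okS _ (iota _ _) => apply okS_iota
 | |- okS _ (Dps _ _) => apply okS_Dps
 | |- okS _ (Dn _ _) => apply okS_Dn
 | |- okS _ (T2 _ _ _) => apply okS_T2
 end.
Ltac okt := okt2.

Lemma DS_zero {A B : Ob X} : DS X (zerops X (A:=A) (B:=B)).
Proof. intros n. rewrite Dn_zerops. apply L0_zero; auto. Qed.
Lemma DS_add {A B} (f g : preseq X A B) : okS X f -> okS X g -> DS X f -> DS X g -> DS X (addps X f g).
Proof. intros Of Og Df Dg n. rewrite Dn_addps. apply L0_add; auto; apply okS_Dn; auto. Qed.
Lemma DS_pairps {C A B} (f : preseq X C A) (g : preseq X C B) : okS X f -> okS X g -> DS X f -> DS X g ->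
  DS X (pairps X f g).
Proof. intros Of Og Df Dg n. rewrite Dn_pairps. apply L0_pairps; auto; apply okS_Dn; auto. Qed.
Lemma DS_lact {A' A B} (k : Hom X A' A) (f : preseq X A B) : addit X k -> okS X f -> DS X f -> DS X (lact X k f).
Proof. intros Hk Of Df n. rewrite Dn_lact. apply L0_lact; auto. apply addit_Pnm; auto. apply okS_Dn; auto. Qed.
Lemma DS_iota_gen n : forall A B (h : Hom X A B), addit X h -> L0 X (Dn n (iota X h)).
Proof.
  induction n; intros A B h Hh.
  - apply L0_iota; auto.
  - change (L0 X (Dn n (Dps X (iota X h)))). rewrite Dps_iota; auto. apply addit_ok; auto.
    apply IHn. apply addit_comp; auto. apply addit_p1; auto.
Qed.
Lemma DS_iota {A B} (h : Hom X A B) : addit X h -> DS X (iota X h).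
Proof. intros Hh n. apply DS_iota_gen; auto. Qed.
Lemma DS_Tps {A B} (f : preseq X A B) : okS X f -> DS X f -> DS X (Tps X f).
Proof.
  intros Of Df. rewrite Tps_eq. apply DS_pairps; try okt.
  apply DS_lact; auto. apply addit_p0; auto. apply DS_Dps; auto.
Qed.
Lemma DS_Tn n : forall A B (f : preseq X A B), okS X f -> DS X f -> DS X (Tn X n f).
Proof. induction n; intros; simpl; auto. apply IHn. okt. apply DS_Tps; auto. Qed.
Lemma DS_compps {A B C} (f : preseq X A B) (g : preseq X B C) : okS X f -> okS X g -> DS X f -> DS X g ->
  DS X (compps X f g).
Proof.
  intros Of Og Df Dg n. rewrite Dn_compps. apply L0_compps; try okt.
  - apply (DS_Tn n _ _ f Of Df 0).
  - apply Dg.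
Qed.

Lemma term_eq {C} (u v : Hom X C (term X)) : ok u -> ok v -> u = v.
Proof. intros. rewrite (bang_uniq _ HX _ u); auto. rewrite (bang_uniq _ HX _ v); auto. Qed.
Lemma psterm_eq {C} (u v : preseq X C (term X)) : okS X u -> okS X v -> u = v.
Proof. intros Ou Ov. extensionality n. apply term_eq; auto. Qed.
Lemma DS_term {A} (f : preseq X A (term X)) : okS X f -> DS X f.
Proof.
  intros Of n. have O := okS_Dn X n _ _ f Of.
  unfold L0. split; [|split;[|split]]; apply psterm_eq; try okt.
Qed.

Lemma okD_iff {A B} (f : preseq X A B) : okD X f <-> okS X f /\ DS X f.
Proof. unfold okD. split; intros [a b]; split; auto; apply Dseq_iff; auto. Qed.

Lemma idm_iota (A : Ob X) : (fun n => iseq n A) = iota X (idm A).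
Proof. extensionality n. unfold iota. symmetry. apply idr; okt. Qed.

Lemma okD_iota {A B} (h : Hom X A B) : addit X h -> okD X (iota X h).
Proof. intros. apply okD_iff. split. apply okS_iota; auto. apply addit_ok; auto. apply DS_iota; auto. Qed.

Lemma Dc_CLAC : is_CLAC (Dc X).
Proof.
  constructor; simpl; intros.
  - rewrite idm_iota. apply okD_iota. apply addit_id; auto.
  - apply okD_iff in H as [O1 D1]. apply okD_iff in H0 as [O2 D2].
    apply okD_iff. split. okt. apply DS_compps; auto.
  - apply okD_iff in H as [O1 D1]. apply okD_iff in H0 as [O2 D2].
    apply okD_iff. split. okt. apply DS_add; auto.
  - apply okD_iff. split. okt. apply DS_zero.
  - change (okD X (iota X (p0 A B))). apply okD_iota. apply addit_p0; auto.
  - change (okD X (iota X (p1 A B))). apply okD_iota. apply addit_p1; auto.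
  - apply okD_iff in H as [O1 D1]. apply okD_iff in H0 as [O2 D2].
    change (okD X (pairps X f g)).
    apply okD_iff. split. okt. apply DS_pairps; auto.
  - apply okD_iff. split. intro n. apply okbang; auto. apply DS_term. intro n. apply okbang; auto.
  - apply okD_iff in H as [O1 D1].
    rewrite idm_iota. rewrite compps_iota_l; try okt. apply lact_id; auto.
  - apply okD_iff in H as [O1 D1].
    rewrite idm_iota. rewrite compps_iota; try okt. extensionality n. unfold ract. apply idr; okt.
  - apply okD_iff in H as [O1 D1]. apply okD_iff in H0 as [O2 D2]. apply okD_iff in H1 as [O3 D3].
    apply compps_assoc; auto.
  - apply okD_iff in H as [O1 D1]. apply okD_iff in H0 as [O2 D2]. apply okD_iff in H1 as [O3 D3].
    extensionality n. unfold addps. apply (add_assoc _ HX); okt.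
  - apply okD_iff in H as [O1 D1]. apply okD_iff in H0 as [O2 D2].
    extensionality n. unfold addps. apply (add_comm _ HX); okt.
  - apply okD_iff in H as [O1 D1].
    extensionality n. unfold addps, zerops. apply (add_0l _ HX); okt.
  - apply okD_iff in H as [O1 D1]. apply okD_iff in H0 as [O2 D2]. apply okD_iff in H1 as [O3 D3].
    apply compps_addr; auto.
  - apply okD_iff in H as [O1 D1]. apply compps_zeror; auto.
  - apply okD_iff in H as [O1 D1]. apply okD_iff in H0 as [O2 D2].
    change (compps X (pairps X f g) (iota X (p0 A B)) = f).
    rewrite compps_iota; try okt. extensionality n. unfold ract, pairps. apply pp0; okt.
  - apply okD_iff in H as [O1 D1]. apply okD_iff in H0 as [O2 D2].
    change (compps X (pairps X f g) (iota X (p1 A B)) = g).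
    rewrite compps_iota; try okt. extensionality n. unfold ract, pairps. apply pp1; okt.
  - apply okD_iff in H as [O1 D1].
    change (pairps X (compps X h (iota X (p0 A B))) (compps X h (iota X (p1 A B))) = h).
    rewrite !compps_iota; try okt. extensionality n. unfold ract, pairps. apply (pair_eta _ HX); okt.
  - apply okD_iff in H as [O1 D1]. extensionality n. apply (bang_uniq _ HX). okt.
  - apply okD_iff in H as [O1 D1]. apply okD_iff in H0 as [O2 D2].
    change (compps X (addps X f g) (iota X (p0 A B)) = addps X (compps X f (iota X (p0 A B))) (compps X g (iota X (p0 A B)))).
    rewrite !compps_iota; try okt. extensionality n. unfold ract, addps. apply (p0_add _ HX); okt.
  - change (compps X (@zerops X C (prod X A B)) (iota X (p0 A B)) = zerops X).
    rewrite !compps_iota; try okt. extensionality n. unfold ract, zerops. apply (p0_zero _ HX).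
  - apply okD_iff in H as [O1 D1]. apply okD_iff in H0 as [O2 D2].
    change (compps X (addps X f g) (iota X (p1 A B)) = addps X (compps X f (iota X (p1 A B))) (compps X g (iota X (p1 A B)))).
    rewrite !compps_iota; try okt. extensionality n. unfold ract, addps. apply (p1_add _ HX); okt.
  - change (compps X (@zerops X C (prod X A B)) (iota X (p1 A B)) = zerops X).
    rewrite !compps_iota; try okt. extensionality n. unfold ract, zerops. apply (p1_zero _ HX).
Qed.

End X6.

Section X7.
Variable X : RawCLAC.
Hypothesis HX : is_CLAC X.
Local Notation "f ;; g" := (@comp X _ _ _ f g) (at level 40, left associativity).
Local Notation "f ++ g" := (@add X _ _ f g).

Ltac okt_ext2 ::= match goal with
 | |- ok _ => progress (cbn [Dc prod])
 | |- @ok ?R _ _ ?f => progress change (@ok R _ _ f)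
 | |- @okS ?R _ _ ?f => progress change (@okS R _ _ f)
 | |- ok (T0 _ _ _) => apply okT0
 | |- ok (?g ?m) => refine ((_ : okS X g) m)
 | |- okS _ (lact _ _ _) => apply okS_lact
 | |- okS _ (ract _ _ _) => apply okS_ract
 | |- okS _ (addps _ _ _) => apply okS_add
 | |- okS _ (zerops _) => apply okS_zero
 | |- okS _ (pairps _ _ _) => apply okS_pairps
 | |- okS _ (Tps _ _) => apply okS_Tps
 | |- okS _ (Tn _ _ _) => apply okS_Tn
 | |- okS _ (compps _ _ _) => apply okS_compps
 | |- okS _ (iota _ _) => apply okS_iota
 | |- okS _ (Dps _ _) => apply okS_Dps
 | |- okS _ (Dn _ _) => apply okS_Dn
 | |- okS _ (T2 _ _ _) => apply okS_T2
 end.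
Ltac okt := okt2.

Definition dl {A B} (f : preseq X A B) : preseq (Dc X) A B := fun n => Dn n f.

Lemma Dn_delta n : forall A B (f : preseq X A B), Dn (R:=Dc X) n (dl f) = dl (Dn n f).
Proof.
  induction n; intros A B f. reflexivity.
  change (Dn (R:=Dc X) n (dl (Dps X f)) = dl (Dn n (Dps X f))). apply IHn.
Qed.

Lemma Dn0 n : forall A B (f : preseq X A B), Dn n f 0 = f n.
Proof. induction n; intros. reflexivity. simpl. apply (IHn _ _ (Dps X f)). Qed.

Lemma iotaD_comp {A B C} (a : Hom X A B) (b : Hom X B C) : ok a -> ok b ->
  @comp (Dc X) _ _ _ (iota X a) (iota X b) = iota X (a ;; b).
Proof. intros. change (compps X (iota X a) (iota X b) = iota X (a ;; b)).
  rewrite compps_iota; try okt. apply ract_iota; auto. Qed.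
Lemma iotaD_pair {C A B} (a : Hom X C A) (b : Hom X C B) : ok a -> ok b ->
  @pair (Dc X) _ _ _ (iota X a) (iota X b) = iota X (pair a b).
Proof. intros. extensionality n. simpl. unfold iota. symmetry. apply comp_pair; okt. Qed.
Lemma iotaD_add {A B} (a b : Hom X A B) : ok a -> ok b ->
  @add (Dc X) _ _ (iota X a) (iota X b) = iota X (a ++ b).
Proof. intros. extensionality n. simpl. unfold addps, iota. symmetry. apply caddr; okt. Qed.
Lemma iotaD_zero {A B : Ob X} : @zero (Dc X) A B = iota X zero.
Proof. extensionality n. simpl. unfold zerops, iota. symmetry. apply c0r; okt. Qed.
Lemma iotaD_id (A : Ob X) : @idm (Dc X) A = iota X (idm A).
Proof. apply idm_iota; auto. Qed.
Lemma iotaD_p0 (A B : Ob X) : @p0 (Dc X) A B = iota X (p0 A B). Proof. reflexivity. Qed.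
Lemma iotaD_p1 (A B : Ob X) : @p1 (Dc X) A B = iota X (p1 A B). Proof. reflexivity. Qed.
Lemma iotaD_cross {A B A' B'} (a : Hom X A A') (b : Hom X B B') : ok a -> ok b ->
  cross (Dc X) (iota X a) (iota X b) = iota X (cross X a b).
Proof.
  intros. unfold cross. rewrite iotaD_p0 iotaD_p1. rewrite !iotaD_comp; try okt.
  rewrite iotaD_pair; try okt. reflexivity.
Qed.
Lemma iotaD_Pm {A B} (a : Hom X A B) : ok a -> Pm (Dc X) (iota X a) = iota X (Pm X a).
Proof. intros. apply iotaD_cross; auto. Qed.
Lemma iotaD_Pnm n : forall A B (a : Hom X A B), ok a -> Pnm (R:=Dc X) n (iota X a) = iota X (Pnm n a).
Proof. induction n; intros. reflexivity.
  change (Pnm (R:=Dc X) n (Pm (Dc X) (iota X a)) = iota X (Pnm n (Pm X a))).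
  rewrite iotaD_Pm; auto. apply IHn; okt. Qed.
Lemma iotaD_iseq n : forall (A : Ob X), iseq (R:=Dc X) n A = iota X (iseq n A).
Proof.
  induction n; intros. apply iotaD_id.
  change (@comp (Dc X) _ _ _ (iseq (R:=Dc X) n (P A)) (@p1 (Dc X) A A) = iota X (iseq n (P A) ;; p1 A A)).
  rewrite IHn. rewrite iotaD_p1. apply iotaD_comp; okt.
Qed.
Lemma iotaD_ell (Y : Ob X) : ellmap (Dc X) Y = iota X (ellmap X Y).
Proof.
  unfold ellmap. rewrite !iotaD_id !iotaD_zero. rewrite !iotaD_pair; try okt.
  apply iotaD_cross; okt.
Qed.
Lemma iotaD_cmap (Y : Ob X) : cmap (Dc X) Y = iota X (cmap X Y).
Proof.
  unfold cmap. rewrite !iotaD_p0 !iotaD_p1. rewrite !iotaD_comp; try okt.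
  rewrite !iotaD_pair; try okt. reflexivity.
Qed.

Lemma Dn_iota n : forall A B (h : Hom X A B), ok h -> Dn n (iota X h) = iota X (iseq n A ;; h).
Proof.
  induction n; intros; simpl.
  - extensionality k. unfold iota. f_equal. symmetry. apply idl; okt.
  - rewrite Dps_iota; auto. rewrite IHn; try okt. f_equal. symmetry. apply assoc; okt.
Qed.

Lemma lactD_dl {A' A B} (h : Hom X A' A) (g : preseq X A B) : ok h -> okS X g ->
  lact (Dc X) (iota X h) (dl g) = dl (lact X h g).
Proof.
  intros. extensionality k. unfold dl. rewrite Dn_lact.
  change (compps X (Pnm (R:=Dc X) k (iota X h)) (Dn k g) = lact X (Pnm k h) (Dn k g)).
  rewrite iotaD_Pnm; auto. apply compps_iota_l; try okt.
Qed.
Lemma DpsD_dl {A B} (g : preseq X A B) : Dps (Dc X) (dl g) = dl (Dps X g).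
Proof. reflexivity. Qed.
Lemma addD_dl {A B} (f g : preseq X A B) : addps (Dc X) (dl f) (dl g) = dl (addps X f g).
Proof. extensionality k. change (addps X (Dn k f) (Dn k g) = Dn k (addps X f g)). symmetry. apply Dn_addps. Qed.
Lemma zeroD_dl {A B : Ob X} : zerops (Dc X) (A:=A) (B:=B) = dl (zerops X).
Proof. extensionality k. change (zerops X = Dn k (zerops X (A:=A) (B:=B))). symmetry. apply Dn_zerops. Qed.

Lemma L0D_dl {A B} (g : preseq X A B) : okS X g -> L0 X g -> L0 (Dc X) (dl g).
Proof.
  intros Og [g1 [g2 [g3 g4]]]. unfold L0.
  rewrite !iotaD_id !iotaD_zero !iotaD_p0 !iotaD_p1 !iotaD_add; try okt.
  rewrite !iotaD_pair; try okt. rewrite !iotaD_cross; try okt.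
  rewrite iotaD_ell iotaD_cmap. rewrite !DpsD_dl.
  rewrite !lactD_dl; try okt. rewrite addD_dl zeroD_dl.
  rewrite g1 g2 g3 g4. auto.
Qed.

Lemma okD_dl {A B} (f : preseq X A B) : okD X f -> okD (Dc X) (dl f).
Proof.
  intros Hf. apply okD_iff in Hf as [Of Df]. apply okD_iff. split.
  - intro n. unfold dl. change (okD X (Dn n f)). apply okD_iff. split. apply okS_Dn; auto. apply DS_Dn; auto.
  - intro n. rewrite Dn_delta. apply L0D_dl. okt. apply (DS_Dn X n _ _ f Df 0).
Qed.

Lemma TpsD_dl {A B} (f : preseq X A B) : okS X f -> Tps (Dc X) (dl f) = dl (Tps X f).
Proof.
  intros Of. extensionality k. unfold dl. rewrite Tps_eq. rewrite Dn_pairps Dn_lact.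
  change (pairps X (compps X (Pnm (R:=Dc X) k (p0 (r:=Dc X) A A)) (Dn k f)) (Dn (S k) f)
          = pairps X (lact X (Pnm k (p0 A A)) (Dn k f)) (Dn k (Dps X f))).
  rewrite iotaD_p0 iotaD_Pnm; try okt. rewrite compps_iota_l; try okt. reflexivity.
Qed.
Lemma TnD_dl n : forall A B (f : preseq X A B), okS X f -> Tn (Dc X) n (dl f) = dl (Tn X n f).
Proof. induction n; intros; simpl. reflexivity. rewrite TpsD_dl; auto. apply IHn; okt. Qed.

Lemma eps_sfun : is_sfun (eps X).
Proof.
  constructor; simpl; intros.
  - apply okD_iff in H as [O _]. exact (O 0).
  - reflexivity.
  - reflexivity.
  - reflexivity.
  - reflexivity.
  - apply idl; okt.
  - apply idl; okt.
Qed.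

Lemma delta_sfun : is_sfun (delta X).
Proof.
  constructor; simpl; intros.
  - apply okD_dl; auto.
  - extensionality n. change (Dn n (fun k => iseq k A) = iseq (R:=Dc X) n A).
    rewrite idm_iota; auto. rewrite Dn_iota; try okt. rewrite iotaD_iseq. f_equal. apply idr; okt.
  - apply okD_iff in H as [O1 D1]. apply okD_iff in H0 as [O2 D2].
    extensionality n. rewrite Dn_compps.
    change (compps X (Tn X n f) (Dn n g) = compps X (Tn (Dc X) n (dl f) 0) (Dn n g)).
    rewrite TnD_dl; auto.
  - extensionality n. apply Dn_addps.
  - extensionality n. apply Dn_zerops.
  - extensionality n. change (Dn n (iota X (p0 A B)) = compps X (iseq (R:=Dc X) n (prod X A B)) (iota X (p0 A B))).
    rewrite Dn_iota; try okt. rewrite iotaD_iseq. rewrite compps_iota; try okt. symmetry. apply ract_iota; okt.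
  - extensionality n. change (Dn n (iota X (p1 A B)) = compps X (iseq (R:=Dc X) n (prod X A B)) (iota X (p1 A B))).
    rewrite Dn_iota; try okt. rewrite iotaD_iseq. rewrite compps_iota; try okt. symmetry. apply ract_iota; okt.
Qed.

End X7.

Section Cast.
Variable R : RawCLAC.
Lemma castH_comp {A A' B B' C C' : Ob R} (e1 : A = A') (e2 : B = B') (e3 : C = C') (f : Hom R A B) (g : Hom R B C) :
  comp (castH e1 e2 f) (castH e2 e3 g) = castH e1 e3 (comp f g).
Proof. destruct e1, e2, e3. reflexivity. Qed.
Lemma castH_ok {A A' B B' : Ob R} (e1 : A = A') (e2 : B = B') (f : Hom R A B) : ok f -> ok (castH e1 e2 f).
Proof. destruct e1, e2. auto. Qed.
Lemma castH_castH {A A' A'' B B' B'' : Ob R} (a : A' = A'') (b : B' = B'') (c : A = A') (d : B = B') (x : Hom R A B) :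
  castH a b (castH c d x) = castH (eq_trans c a) (eq_trans d b) x.
Proof. destruct a, b, c, d. reflexivity. Qed.
Lemma castH_UIP {A A' B B' : Ob R} (e1 e1' : A = A') (e2 e2' : B = B') (x : Hom R A B) :
  castH e1 e2 x = castH e1' e2' x.
Proof. rewrite (UIP _ _ _ e1 e1') (UIP _ _ _ e2 e2'). reflexivity. Qed.
Lemma castH_rr {A B : Ob R} (e1 : A = A) (e2 : B = B) (x : Hom R A B) : castH e1 e2 x = x.
Proof. rewrite (castH_UIP e1 eq_refl e2 eq_refl). reflexivity. Qed.
Lemma castH_id {A A' : Ob R} (e : A = A') : castH e e (idm A) = idm A'.
Proof. destruct e. reflexivity. Qed.
Lemma castH_zero {A A' B B' : Ob R} (e1 : A = A') (e2 : B = B') : castH e1 e2 (@zero R A B) = zero.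
Proof. destruct e1, e2. reflexivity. Qed.
Lemma castH_add {A A' B B' : Ob R} (e1 : A = A') (e2 : B = B') (f g : Hom R A B) :
  castH e1 e2 (add f g) = add (castH e1 e2 f) (castH e1 e2 g).
Proof. destruct e1, e2. reflexivity. Qed.
Lemma castH_inv {A A' B B' : Ob R} (e1 : A = A') (e2 : B = B') (x : Hom R A B) (y : Hom R A' B') :
  castH e1 e2 x = y -> x = castH (eq_sym e1) (eq_sym e2) y.
Proof. destruct e1, e2. simpl. auto. Qed.
End Cast.

Lemma castHD (Y : RawCLAC) {A A' B B' : Ob Y} (e1 : A = A') (e2 : B = B') (g : preseq Y A B) :
  castH (R:=Dc Y) e1 e2 g = fun n => castH (f_equal (fun Z => Pn n Z) e1) e2 (g n).
Proof. destruct e1, e2. reflexivity. Qed.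

Lemma castH_Fm {X Y : RawCLAC} (G : RawFun X Y) {A A' B B' : Ob X} (e1 : A = A') (e2 : B = B') (x : Hom X A B) :
  Fm G (castH e1 e2 x) = castH (f_equal (Fo G) e1) (f_equal (Fo G) e2) (Fm G x).
Proof. destruct e1, e2. reflexivity. Qed.

Section Fun.
Variables X Y : RawCLAC.
Hypothesis HX : is_CLAC X.
Hypothesis HY : is_CLAC Y.
Variable F : RawFun X Y.
Hypothesis HF : is_sfun F.

Ltac okt := okt2.

Definition Rel {A0 B0 : Ob X} {A B : Ob Y} (h0 : Hom X A0 B0) (h : Hom Y A B) : Prop :=
  ok h0 /\ exists (e1 : Fo F A0 = A) (e2 : Fo F B0 = B), h = castH e1 e2 (Fm F h0).

Lemma Rel_ok {A0 B0 A B} (h0 : Hom X A0 B0) (h : Hom Y A B) : Rel h0 h -> ok h.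
Proof. intros [O [e1 [e2 E]]]. rewrite E. apply castH_ok. apply (fm_ok F HF); auto. Qed.
Lemma Rel_ok0 {A0 B0 A B} (h0 : Hom X A0 B0) (h : Hom Y A B) : Rel h0 h -> ok h0.
Proof. intros [O _]; auto. Qed.
Lemma Rel_src {A0 B0 A B} (h0 : Hom X A0 B0) (h : Hom Y A B) : Rel h0 h -> Fo F A0 = A.
Proof. intros [O [e1 _]]; auto. Qed.
Lemma Rel_tgt {A0 B0 A B} (h0 : Hom X A0 B0) (h : Hom Y A B) : Rel h0 h -> Fo F B0 = B.
Proof. intros [O [e1 [e2 _]]]; auto. Qed.
Lemma Rel_unique {A0 B0 A B} (h0 : Hom X A0 B0) (h h' : Hom Y A B) : Rel h0 h -> Rel h0 h' -> h = h'.
Proof. intros [O [e1 [e2 E]]] [O' [e1' [e2' E']]]. rewrite E E'. apply castH_UIP. Qed.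
Lemma Rel_castH {A0 B0 A B A' B'} (h0 : Hom X A0 B0) (h : Hom Y A B) (a : A = A') (b : B = B') :
  Rel h0 h -> Rel h0 (castH a b h).
Proof. intros [O [e1 [e2 E]]]. split; auto. rewrite E. exists (eq_trans e1 a), (eq_trans e2 b). apply castH_castH. Qed.

Lemma Rel_comp {A0 B0 C0 A B C} (f0 : Hom X A0 B0) (g0 : Hom X B0 C0) (f : Hom Y A B) (g : Hom Y B C) :
  Rel f0 f -> Rel g0 g -> Rel (comp f0 g0) (comp f g).
Proof.
  intros [O1 [e1 [e2 E1]]] [O2 [e2' [e3 E2]]]. split. okt.
  rewrite (UIP _ _ _ e2' e2) in E2. rewrite E1 E2. exists e1, e3.
  rewrite castH_comp. rewrite (fm_comp F HF); auto.
Qed.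

Lemma Rel_id {A0 A} (e : Fo F A0 = A) : Rel (idm A0) (idm A).
Proof. split. okt. exists e, e. rewrite (fm_id F HF). symmetry. apply castH_id. Qed.
Lemma Rel_zero {A0 B0 A B} (e1 : Fo F A0 = A) (e2 : Fo F B0 = B) : Rel (@zero X A0 B0) (@zero Y A B).
Proof. split. okt. exists e1, e2. rewrite (fm_zero F HF). symmetry. apply castH_zero. Qed.
Lemma Rel_add {A0 B0 A B} (f0 g0 : Hom X A0 B0) (f g : Hom Y A B) : Rel f0 f -> Rel g0 g -> Rel (add f0 g0) (add f g).
Proof.
  intros [O1 [e1 [e2 E1]]] [O2 [e1' [e2' E2]]]. split. okt.
  rewrite (UIP _ _ _ e1' e1) (UIP _ _ _ e2' e2) in E2. rewrite E1 E2. exists e1, e2.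
  rewrite (fm_add F HF); auto. symmetry. apply castH_add.
Qed.

Definition prod_eq {A A' B B' : Ob Y} (e1 : A = A') (e2 : B = B') : prod Y A B = prod Y A' B' :=
  match e1 in _ = Z return prod Y A B = prod Y Z B' with
  | eq_refl => match e2 in _ = W return prod Y A B = prod Y A W with eq_refl => eq_refl end end.
Definition eprod {A0 B0 A B} (e1 : Fo F A0 = A) (e2 : Fo F B0 = B) : Fo F (prod X A0 B0) = prod Y A B :=
  eq_trans (Fprod F A0 B0) (prod_eq e1 e2).

Lemma Rel_p0 {A0 B0 A B} (e1 : Fo F A0 = A) (e2 : Fo F B0 = B) : Rel (p0 A0 B0) (p0 A B).
Proof.
  split. okt. exists (eprod e1 e2), e1. destruct e1, e2. unfold eprod. simpl.
  symmetry. apply (fm_p0 F HF).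
Qed.
Lemma Rel_p1 {A0 B0 A B} (e1 : Fo F A0 = A) (e2 : Fo F B0 = B) : Rel (p1 A0 B0) (p1 A B).
Proof.
  split. okt. exists (eprod e1 e2), e2. destruct e1, e2. unfold eprod. simpl.
  symmetry. apply (fm_p1 F HF).
Qed.

Lemma Fm_pair {C0 A0 B0} (f0 : Hom X C0 A0) (g0 : Hom X C0 B0) : ok f0 -> ok g0 ->
  castH eq_refl (Fprod F A0 B0) (Fm F (pair f0 g0)) = pair (Fm F f0) (Fm F g0).
Proof.
  intros. apply (pair_ext Y HY).
  - apply castH_ok. apply (fm_ok F HF). okt.
  - apply (okpair Y HY); apply (fm_ok F HF); auto.
  - rewrite (pp0 Y HY); try (apply (fm_ok F HF); auto).
    rewrite -(fm_p0 F HF A0 B0). rewrite castH_comp. rewrite -(fm_comp F HF); try okt.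
    rewrite (pp0 X HX); auto.
  - rewrite (pp1 Y HY); try (apply (fm_ok F HF); auto).
    rewrite -(fm_p1 F HF A0 B0). rewrite castH_comp. rewrite -(fm_comp F HF); try okt.
    rewrite (pp1 X HX); auto.
Qed.

Lemma Rel_pair {C0 A0 B0 C A B} (f0 : Hom X C0 A0) (g0 : Hom X C0 B0) (f : Hom Y C A) (g : Hom Y C B) :
  Rel f0 f -> Rel g0 g -> Rel (pair f0 g0) (pair f g).
Proof.
  intros [O1 [e1 [e2 E1]]] [O2 [e1' [e3 E2]]]. split. okt.
  rewrite (UIP _ _ _ e1' e1) in E2. rewrite E1 E2. exists e1, (eprod e2 e3).
  destruct e1, e2, e3. unfold eprod. simpl. symmetry. apply Fm_pair; auto.
Qed.

Lemma Rel_cross {A0 B0 A0' B0' A B A' B'} (a0 : Hom X A0 A0') (b0 : Hom X B0 B0') (a : Hom Y A A') (b : Hom Y B B') :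
  Rel a0 a -> Rel b0 b -> Rel (cross X a0 b0) (cross Y a b).
Proof.
  intros Ha Hb. unfold cross. apply Rel_pair; apply Rel_comp; auto.
  apply Rel_p0. apply (Rel_src _ _ Ha). apply (Rel_src _ _ Hb).
  apply Rel_p1. apply (Rel_src _ _ Ha). apply (Rel_src _ _ Hb).
Qed.
Lemma Rel_Pm {A0 B0 A B} (h0 : Hom X A0 B0) (h : Hom Y A B) : Rel h0 h -> Rel (Pm X h0) (Pm Y h).
Proof. intros. apply Rel_cross; auto. Qed.
Lemma Rel_Pnm n : forall A0 B0 A B (h0 : Hom X A0 B0) (h : Hom Y A B), Rel h0 h -> Rel (Pnm n h0) (Pnm n h).
Proof. induction n; intros; simpl; auto. apply IHn. apply Rel_Pm; auto. Qed.

Lemma eP {A0 A} (e : Fo F A0 = A) : Fo F (P A0) = P A.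
Proof. exact (eprod e e). Qed.
Lemma ePn n : forall A0 A, Fo F A0 = A -> Fo F (Pn n A0) = Pn n A.
Proof. induction n; intros; simpl; auto. apply IHn. apply eP; auto. Qed.

Lemma Rel_iseq n : forall A0 A, Fo F A0 = A -> Rel (iseq n A0) (iseq n A).
Proof.
  induction n; intros; simpl. apply Rel_id; auto.
  apply Rel_comp. apply IHn. apply eP; auto. apply Rel_p1; auto.
Qed.

Definition RelS {A0 B0 A B} (g0 : preseq X A0 B0) (g : preseq Y A B) : Prop := forall n, Rel (g0 n) (g n).

Lemma RelS_unique {A0 B0 A B} (g0 : preseq X A0 B0) (g g' : preseq Y A B) : RelS g0 g -> RelS g0 g' -> g = g'.
Proof. intros H H'. extensionality n. apply (Rel_unique _ _ _ (H n) (H' n)). Qed.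
Lemma RelS_eq {A0 B0 A B} (g0 g0' : preseq X A0 B0) (g g' : preseq Y A B) :
  RelS g0 g -> RelS g0' g' -> g0 = g0' -> g = g'.
Proof. intros H H' E. subst. apply (RelS_unique _ _ _ H H'). Qed.
Lemma RelS_ok {A0 B0 A B} (g0 : preseq X A0 B0) (g : preseq Y A B) : RelS g0 g -> okS Y g.
Proof. intros H n. apply (Rel_ok _ _ (H n)). Qed.
Lemma RelS_ok0 {A0 B0 A B} (g0 : preseq X A0 B0) (g : preseq Y A B) : RelS g0 g -> okS X g0.
Proof. intros H n. apply (Rel_ok0 _ _ (H n)). Qed.
Lemma RelS_src {A0 B0 A B} (g0 : preseq X A0 B0) (g : preseq Y A B) : RelS g0 g -> Fo F A0 = A.
Proof. intros H. apply (Rel_src _ _ (H 0)). Qed.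
Lemma RelS_tgt {A0 B0 A B} (g0 : preseq X A0 B0) (g : preseq Y A B) : RelS g0 g -> Fo F B0 = B.
Proof. intros H. apply (Rel_tgt _ _ (H 0)). Qed.

Lemma RelS_lact {A0' A0 B0 A' A B} (h0 : Hom X A0' A0) (h : Hom Y A' A) (g0 : preseq X A0 B0) (g : preseq Y A B) :
  Rel h0 h -> RelS g0 g -> RelS (lact X h0 g0) (lact Y h g).
Proof. intros Hh Hg n. apply Rel_comp; auto. apply Rel_Pnm; auto. Qed.
Lemma RelS_ract {A0 B0 C0 A B C} (g0 : preseq X A0 B0) (g : preseq Y A B) (k0 : Hom X B0 C0) (k : Hom Y B C) :
  RelS g0 g -> Rel k0 k -> RelS (ract X g0 k0) (ract Y g k).
Proof. intros Hg Hk n. apply Rel_comp; auto. Qed.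
Lemma RelS_Dps {A0 B0 A B} (g0 : preseq X A0 B0) (g : preseq Y A B) : RelS g0 g -> RelS (Dps X g0) (Dps Y g).
Proof. intros H n. apply (H (S n)). Qed.
Lemma RelS_Dn n : forall A0 B0 A B (g0 : preseq X A0 B0) (g : preseq Y A B), RelS g0 g -> RelS (Dn n g0) (Dn n g).
Proof. induction n; intros; simpl; auto. apply IHn. apply RelS_Dps; auto. Qed.
Lemma RelS_add {A0 B0 A B} (f0 g0 : preseq X A0 B0) (f g : preseq Y A B) :
  RelS f0 f -> RelS g0 g -> RelS (addps X f0 g0) (addps Y f g).
Proof. intros H1 H2 n. apply Rel_add; auto. Qed.
Lemma RelS_zero {A0 B0 A B} (e1 : Fo F A0 = A) (e2 : Fo F B0 = B) : RelS (zerops X (A:=A0) (B:=B0)) (zerops Y (A:=A) (B:=B)).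
Proof. intros n. apply Rel_zero; auto. apply ePn; auto. Qed.
Lemma RelS_pairps {C0 A0 B0 C A B} (f0 : preseq X C0 A0) (g0 : preseq X C0 B0) (f : preseq Y C A) (g : preseq Y C B) :
  RelS f0 f -> RelS g0 g -> RelS (pairps X f0 g0) (pairps Y f g).
Proof. intros H1 H2 n. apply Rel_pair; auto. Qed.
Lemma RelS_Tps {A0 B0 A B} (g0 : preseq X A0 B0) (g : preseq Y A B) : RelS g0 g -> RelS (Tps X g0) (Tps Y g).
Proof.
  intros H. rewrite !Tps_eq. apply RelS_pairps. apply RelS_lact; auto.
  apply Rel_p0; apply (RelS_src _ _ H). apply RelS_Dps; auto.
Qed.
Lemma RelS_Tn n : forall A0 B0 A B (g0 : preseq X A0 B0) (g : preseq Y A B), RelS g0 g -> RelS (Tn X n g0) (Tn Y n g).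
Proof. induction n; intros; simpl; auto. apply IHn. apply RelS_Tps; auto. Qed.
Lemma RelS_compps {A0 B0 C0 A B C} (f0 : preseq X A0 B0) (g0 : preseq X B0 C0) (f : preseq Y A B) (g : preseq Y B C) :
  RelS f0 f -> RelS g0 g -> RelS (compps X f0 g0) (compps Y f g).
Proof. intros H1 H2 n. apply Rel_comp; auto. apply (RelS_Tn n _ _ _ _ _ _ H1 0). Qed.
Lemma RelS_iota {A0 B0 A B} (h0 : Hom X A0 B0) (h : Hom Y A B) : Rel h0 h -> RelS (iota X h0) (iota Y h).
Proof. intros H n. unfold iota. apply Rel_comp; auto. apply Rel_iseq. apply (Rel_src _ _ H). Qed.

Lemma L0_transfer {A0 B0 A B} (f0 : preseq X A0 B0) (f : preseq Y A B) : RelS f0 f -> L0 X f0 -> L0 Y f.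
Proof.
  intros H [f1 [f2 [f3 f4]]].
  have eA := RelS_src _ _ H. have eB := RelS_tgt _ _ H.
  have D1 := RelS_Dps _ _ H. have D2 := RelS_Dps _ _ D1.
  have Rid := Rel_id eA. have R0 := @Rel_zero A0 A0 A A eA eA.
  have Rp0 := Rel_p0 eA eA. have Rp1 := Rel_p1 eA eA.
  split; [|split;[|split]].
  - apply (RelS_eq _ _ _ _ (RelS_lact _ _ _ _ (Rel_pair _ _ _ _ Rid R0) D1) (RelS_zero eA eB) f1).
  - refine (RelS_eq _ _ _ _ (RelS_lact _ _ _ _ _ D1) (RelS_add _ _ _ _ (RelS_lact _ _ _ _ _ D1) (RelS_lact _ _ _ _ _ D1)) f2).
    + apply Rel_cross; auto. apply Rel_add; auto.
    + apply Rel_cross; auto.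
    + apply Rel_cross; auto.
  - refine (RelS_eq _ _ _ _ (RelS_lact _ _ _ _ _ D2) D1 f3).
    unfold ellmap. apply Rel_cross; apply Rel_pair; auto.
  - refine (RelS_eq _ _ _ _ (RelS_lact _ _ _ _ _ D2) D2 f4).
    unfold cmap. have eP' := eP eA. repeat apply Rel_pair; apply Rel_comp; first [apply Rel_p0 | apply Rel_p1]; auto.
Qed.

Lemma RelS_DF {A B} (f : preseq X A B) : okS X f -> RelS f (Fm (DF F) f).
Proof. intros O n. split. apply O. exists (FPn F n A), eq_refl. reflexivity. Qed.

Lemma DF_sfun : is_sfun (DF F).
Proof.
  constructor; intros.
  - apply (okD_iff X) in H as [O Ds]. apply (okD_iff Y).
    have R := RelS_DF f O. split. apply (RelS_ok _ _ R).
    intro n. apply (L0_transfer (Dn n f)). apply RelS_Dn; auto. apply Ds.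
  - have O : okS X (fun n => iseq (R:=X) n A). { intro n. apply okiseq; auto. }
    refine (RelS_unique _ _ _ (RelS_DF _ O) _).
    intro n. apply Rel_iseq. reflexivity.
  - apply (okD_iff X) in H as [O1 _]. apply (okD_iff X) in H0 as [O2 _].
    refine (RelS_unique (compps X f g) _ _ (RelS_DF _ _) _). apply (okS_compps X HX); auto.
    apply RelS_compps; apply RelS_DF; auto.
  - apply (okD_iff X) in H as [O1 _]. apply (okD_iff X) in H0 as [O2 _].
    refine (RelS_unique (addps X f g) _ _ (RelS_DF _ _) _). apply (okS_add X HX); auto.
    apply RelS_add; apply RelS_DF; auto.
  - refine (RelS_unique (zerops X) _ _ (RelS_DF _ _) _). apply (okS_zero X HX).
    apply RelS_zero; reflexivity.
  - simpl. rewrite castHD.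
    refine (RelS_unique (iota X (p0 (r:=X) A B)) _ _ _ (RelS_iota _ _ (Rel_p0 eq_refl eq_refl))).
    intro n. apply Rel_castH. apply (RelS_DF (iota X (p0 (r:=X) A B))). apply (okS_iota X HX). okt.
  - simpl. rewrite castHD.
    refine (RelS_unique (iota X (p1 (r:=X) A B)) _ _ _ (RelS_iota _ _ (Rel_p1 eq_refl eq_refl))).
    intro n. apply Rel_castH. apply (RelS_DF (iota X (p1 (r:=X) A B))). apply (okS_iota X HX). okt.
Qed.

End Fun.

Lemma feq_DF (X Y : RawCLAC) (F G : RawFun X Y) : is_CLAC X -> is_CLAC Y ->
  is_sfun F -> is_sfun G -> feq F G -> feq (DF F) (DF G).
Proof.
  intros HX HY HF HG [eo Heo]. exists eo. intros A B f Hf.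
  apply (okD_iff X) in Hf as [O _].
  simpl. rewrite castHD.
  refine (RelS_unique X Y G f _ _ _ (RelS_DF X Y G f O)).
  intro n. apply Rel_castH. apply Rel_castH. split. apply O.
  have E := Heo _ _ (f n) (O n).
  apply castH_inv in E. rewrite E.
  exists (eq_sym (eo (Pn n A))), (eq_sym (eo B)). reflexivity.
Qed.

Lemma feq_DF_id (X : RawCLAC) : feq (DF (idF X)) (idF (Dc X)).
Proof.
  exists (fun A => eq_refl). intros A B f Hf. simpl. extensionality n. apply castH_rr.
Qed.

Lemma feq_DF_comp (X Y Z : RawCLAC) (F : RawFun X Y) (G : RawFun Y Z) :
  feq (DF (compF F G)) (compF (DF F) (DF G)).
Proof.
  exists (fun A => eq_refl). intros A B f Hf. simpl. extensionality n.
  rewrite castH_Fm castH_castH. apply castH_UIP.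
Qed.

Lemma nat_eps (X Y : RawCLAC) (F : RawFun X Y) : feq (compF (DF F) (eps Y)) (compF (eps X) F).
Proof. exists (fun A => eq_refl). intros A B f Hf. reflexivity. Qed.

Lemma nat_delta (X Y : RawCLAC) (F : RawFun X Y) : is_CLAC X -> is_CLAC Y -> is_sfun F ->
  feq (compF (delta X) (DF (DF F))) (compF (DF F) (delta Y)).
Proof.
  intros HX HY HF. exists (fun A => eq_refl). intros A B f Hf.
  apply (okD_iff X) in Hf as [O _].
  simpl. extensionality n. rewrite castHD.
  refine (RelS_unique X Y F (Dn n f) _ _ _ _).
  - intro k. apply Rel_castH. apply (RelS_DF X Y F (Dn n f)). apply okS_Dn; auto.
  - refine (RelS_Dn X Y F n _ _ _ _ f (Fm (DF F) f) _). apply RelS_DF; auto.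
Qed.

Lemma counit1 (X : RawCLAC) : feq (compF (delta X) (eps (Dc X))) (idF (Dc X)).
Proof. exists (fun A => eq_refl). intros A B f Hf. reflexivity. Qed.

Lemma counit2 (X : RawCLAC) : feq (compF (delta X) (DF (eps X))) (idF (Dc X)).
Proof.
  exists (fun A => eq_refl). intros A B f Hf. simpl. extensionality n.
  rewrite castH_rr. apply Dn0.
Qed.

Lemma coassoc (X : RawCLAC) : feq (compF (delta X) (delta (Dc X))) (compF (delta X) (DF (delta X))).
Proof.
  exists (fun A => eq_refl). intros A B f Hf. simpl. extensionality n.
  rewrite castH_rr. apply Dn_delta.
Qed.

Theorem proposition4p14 : is_comonad_on_CLAC Dc (@DF) eps delta.
Proof.
  unfold is_comonad_on_CLAC.
  split; [|split; [|split; [|split; [|split; [|split; [|split; [|split; [|split; [|split; [|split]]]]]]]]]].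
  - apply Dc_CLAC.
  - intros X Y F HX HY HF. apply DF_sfun; auto.
  - intros X Y F G HX HY HF HG E. apply feq_DF; auto.
  - intros X HX. apply feq_DF_id.
  - intros X Y Z F G HX HY HZ HF HG. apply feq_DF_comp.
  - apply eps_sfun.
  - apply delta_sfun.
  - intros X Y F HX HY HF. apply nat_eps.
  - intros X Y F HX HY HF. apply nat_delta; auto.
  - intros X HX. apply counit1.
  - intros X HX. apply counit2.
  - intros X HX. apply coassoc.
Qed.
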